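(* Let $r\in(0,R_0]$, $\mu\ge0$, and let $\phi$ be continuous on $A_r$, vanishing at infinity, and satisfying $\Delta\phi=4\pi c_{\mathrm{TF}}^{-3/2}[\phi-\mu]_+^{3/2}$ in $A_r$. Assume $\lim_{s\to r^+}\inf_{\partial A_s}\phi>\mu$. Define \[a(r)=\liminf_{s\to r^+}\sup_{\partial A_s}\Big(\sqrt{c_{\mathrm S}r^{-4}\phi^{-1}}-1\Big),\qquad \omega_a^-(x)=c_{\mathrm S}|x|^{-4}\big(1+a(r)(r|x|^{-1})^\xi\big)^{-2},\] \[A(r)=\liminf_{s\to r^+}\sup_{\partial A_s}\Big(c_{\mathrm S}^{-1}s^4(\phi-\mu)-1\Big),\qquad \omega_A^+(x)=c_{\mathrm S}|x|^{-4}\big(1+A(r)(r|x|^{-1})^\xi\big),\] and $\nu(\mu,r)=\inf_{|x|\ge r}\max\{\mu|x|,\ \omega_a^-(x)|x|\}$. Then for every $x\in A_r$, \[\max\Big\{\max_{1\le j\le K}\omega_a^-(x-R_j),\ \max_{1\le j\le K}\frac{\nu(\mu,r)}{|x-R_j|}\Big\}\le\phi(x)\le\sum_{j=1}^K\omega_A^+(x-R_j)+\mu.\]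
   Context: Pairwise distinct points $R_1,\dots,R_K\in\mathbb{R}^3$ are given; $R_{\min}=\min_{i\ne j}|R_i-R_j|$ ($=+\infty$ if $K=1$), $R_0=\min\{1,R_{\min}/4\}$, and for $r>0$, $A_r=\{x\in\mathbb{R}^3:|x-R_j|>r\text{ for all }j\}$, with boundary $\partial A_r$. Constants: $c_{\mathrm{TF}}=\frac12(3\pi^2)^{2/3}$, $c_{\mathrm S}=3^4 2^{-3}\pi^2$, $\xi=(-7+\sqrt{73})/2$. $[t]_+=\max\{t,0\}$. *)

(* Defs.v *)
From Stdlib Require Import Reals Lra List.
From Coquelicot Require Import Coquelicot.
Open Scope R_scope.

Definition pt : Type := (R * R * R)%type.

Definition psub (x y : pt) : pt :=
  match x, y with ((x1, x2), x3), ((y1, y2), y3) => ((x1 - y1, x2 - y2), x3 - y3) end.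

Definition pnorm (x : pt) : R :=
  match x with ((x1, x2), x3) => sqrt (x1 ^ 2 + x2 ^ 2 + x3 ^ 2) end.

Definition pdist (x y : pt) : R := pnorm (psub x y).

(* x + t e_i, with e_0, e_1, e_2 the standard basis (i >= 2 gives e_2) *)
Definition shift (i : nat) (t : R) (x : pt) : pt :=
  match x with ((x1, x2), x3) =>
    match i with
    | O => ((x1 + t, x2), x3)
    | S O => ((x1, x2 + t), x3)
    | _ => ((x1, x2), x3 + t)
    end
  end.

Definition pd (i : nat) (f : pt -> R) (x : pt) : R :=
  Derive (fun t => f (shift i t x)) 0.

Definition laplacian (f : pt -> R) (x : pt) : R :=
  pd 0 (pd 0 f) x + pd 1 (pd 1 f) x + pd 2 (pd 2 f) x.

Definition C2_on (U : pt -> Prop) (f : pt -> R) : Prop :=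
  forall x, U x ->
    continuous f x /\
    forall i j, (i < 3)%nat -> (j < 3)%nat ->
      ex_derive (fun t => f (shift i t x)) 0 /\
      ex_derive (fun t => pd j f (shift i t x)) 0 /\
      continuous (pd i f) x /\
      continuous (pd i (pd j f)) x.

Definition c_TF : R := / 2 * Rpower (3 * PI ^ 2) (2 / 3).
Definition c_S : R := 3 ^ 4 * / 2 ^ 3 * PI ^ 2.
Definition xi : R := (-7 + sqrt 73) / 2.

Definition pos_part (t : R) : R := Rmax t 0.
Definition pos32 (t : R) : R := pos_part t * sqrt (pos_part t).

Definition A_set (K : nat) (Rs : nat -> pt) (r : R) (x : pt) : Prop :=
  forall j, (j < K)%nat -> r < pdist x (Rs j).

Definition bdA (K : nat) (Rs : nat -> pt) (s : R) (x : pt) : Prop :=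
  (forall j, (j < K)%nat -> s <= pdist x (Rs j)) /\
  (exists j, (j < K)%nat /\ pdist x (Rs j) = s).

(* r <= R_0 = min {1, R_min / 4}, R_min = min_{i<>j} |R_i - R_j| (+oo if K = 1) *)
Definition le_R0 (K : nat) (Rs : nat -> pt) (r : R) : Prop :=
  r <= 1 /\
  forall i j, (i < K)%nat -> (j < K)%nat -> i <> j -> r <= pdist (Rs i) (Rs j) / 4.

Definition inf_bd (K : nat) (Rs : nat -> pt) (f : pt -> R) (s : R) : Rbar :=
  Rbar_glb (fun y => exists x, bdA K Rs s x /\ y = Finite (f x)).
Definition sup_bd (K : nat) (Rs : nat -> pt) (f : pt -> R) (s : R) : Rbar :=
  Rbar_lub (fun y => exists x, bdA K Rs s x /\ y = Finite (f x)).

Definition eventually_right (r : R) (P : R -> Prop) : Prop :=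
  exists d, 0 < d /\ forall s, r < s < r + d -> P s.

Definition lim_right_Rbar (g : R -> Rbar) (r : R) (L : Rbar) : Prop :=
  (forall a : R, Rbar_lt (Finite a) L -> eventually_right r (fun s => Rbar_lt (Finite a) (g s))) /\
  (forall b : R, Rbar_lt L (Finite b) -> eventually_right r (fun s => Rbar_lt (g s) (Finite b))).

Definition liminf_right (g : R -> Rbar) (r : R) : Rbar :=
  Rbar_lub (fun y => exists d, 0 < d /\
    y = Rbar_glb (fun z => exists s, r < s < r + d /\ z = g s)).

Definition a_of (K : nat) (Rs : nat -> pt) (phi : pt -> R) (r : R) : Rbar :=
  liminf_right (fun s => sup_bd K Rs (fun x => sqrt (c_S * / r ^ 4 * / phi x) - 1) s) r.

Definition A_of (K : nat) (Rs : nat -> pt) (phi : pt -> R) (mu r : R) : Rbar :=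
  liminf_right (fun s => sup_bd K Rs (fun x => / c_S * s ^ 4 * (phi x - mu) - 1) s) r.

(* omega_a^-(x) = c_S |x|^-4 (1 + a (r/|x|)^xi)^-2; value +oo where the
   bracket vanishes *)
Definition omega_minus (a r : R) (x : pt) : Rbar :=
  let d := 1 + a * Rpower (r / pnorm x) xi in
  if Req_EM_T d 0 then p_infty else Finite (c_S * / pnorm x ^ 4 * / d ^ 2).

Definition omega_plus (A r : R) (x : pt) : R :=
  c_S * / pnorm x ^ 4 * (1 + A * Rpower (r / pnorm x) xi).

Definition Rbar_maxr (u v : Rbar) : Rbar := if Rbar_lt_dec u v then v else u.

Definition nu (a mu r : R) : Rbar :=
  Rbar_glb (fun y => exists x, r <= pnorm x /\
    y = Rbar_maxr (Finite (mu * pnorm x)) (Rbar_mult (omega_minus a r x) (Finite (pnorm x)))).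

Definition sum_nuclei (K : nat) (f : nat -> R) : R :=
  fold_right Rplus 0 (map f (seq 0 K)).

(* Main.v *)
From Stdlib Require Import ZArith.
Require Import Defs.
From Stdlib Require Import Reals List Lra Psatz ClassicalEpsilon Classical.
From Coquelicot Require Import Coquelicot.
Open Scope R_scope.


Definition coord (i:nat) (y:pt) : R :=
  match y with ((a,b),c) => match i with O => a | S O => b | _ => c end end.

Lemma sqrt_le_l X Y : 0 <= Y -> X <= Y*Y -> sqrt X <= Y.
Proof. intros. rewrite <- (sqrt_square Y) by auto. apply sqrt_le_1_alt; auto. Qed.

Lemma tri3 a b c d e f : sqrt((a+d)^2+(b+e)^2+(c+f)^2) <= sqrt(a^2+b^2+c^2) + sqrt(d^2+e^2+f^2).
Proof.
  set (B := a^2+b^2+c^2). set (C := d^2+e^2+f^2).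
  assert (HB: 0 <= B) by (unfold B; nra). assert (HC: 0<=C) by (unfold C; nra).
  pose proof (sqrt_pos B). pose proof (sqrt_pos C).
  pose proof (sqrt_sqrt B HB) as E1. pose proof (sqrt_sqrt C HC) as E2.
  apply sqrt_le_l. lra.
  assert (a*d+b*e+c*f <= sqrt B * sqrt C).
  { assert (L: (a*d+b*e+c*f)^2 <= B*C).
    { unfold B, C. assert (0 <= (a*e-b*d)^2+(a*f-c*d)^2+(b*f-c*e)^2) by (pose proof (pow2_ge_0 (a*e-b*d)); pose proof (pow2_ge_0 (a*f-c*d)); pose proof (pow2_ge_0 (b*f-c*e)); lra).
      assert ((a^2+b^2+c^2)*(d^2+e^2+f^2) - (a*d+b*e+c*f)^2 = (a*e-b*d)^2+(a*f-c*d)^2+(b*f-c*e)^2) by ring. lra. }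
    assert (B*C = (sqrt B * sqrt C)^2) by (replace ((sqrt B * sqrt C)^2) with ((sqrt B*sqrt B)*(sqrt C*sqrt C)) by ring; rewrite E1, E2; ring).
    destruct (Rle_or_lt (a*d+b*e+c*f) (sqrt B * sqrt C)) as [h|h]; auto.
    assert (0 <= sqrt B * sqrt C) by (apply Rmult_le_pos; auto). nra. }
  unfold B, C in *. nra.
Qed.

Lemma pdist_tri x y z : pdist x z <= pdist x y + pdist y z.
Proof.
  destruct x as [[x1 x2] x3], y as [[y1 y2] y3], z as [[z1 z2] z3].
  unfold pdist, psub, pnorm.
  replace (x1 - z1) with ((x1-y1)+(y1-z1)) by ring.
  replace (x2 - z2) with ((x2-y2)+(y2-z2)) by ring.
  replace (x3 - z3) with ((x3-y3)+(y3-z3)) by ring.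
  apply tri3.
Qed.

Lemma pdist_sym x y : pdist x y = pdist y x.
Proof.
  destruct x as [[x1 x2] x3], y as [[y1 y2] y3]. unfold pdist, psub, pnorm.
  f_equal. ring.
Qed.

Lemma pnorm_pos y : 0 <= pnorm y.
Proof. destruct y as [[a b] c]. apply sqrt_pos. Qed.

Lemma pnorm_sq y : pnorm y ^ 2 = coord 0 y ^2 + coord 1 y ^2 + coord 2 y ^2.
Proof.
  destruct y as [[a b] c]. unfold pnorm; simpl coord.
  rewrite <- Rsqr_pow2, Rsqr_sqrt. ring. nra.
Qed.

Lemma coord_le i y : Rabs (coord i y) <= pnorm y.
Proof.
  rewrite <- sqrt_Rsqr_abs. destruct y as [[a b] c]; unfold pnorm.
  apply sqrt_le_1_alt. unfold Rsqr; destruct i as [|[|i]]; simpl; nra.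
Qed.

Lemma pnorm_le_abs y : pnorm y <= Rabs (coord 0 y) + Rabs (coord 1 y) + Rabs (coord 2 y).
Proof.
  destruct y as [[a b] c]. unfold pnorm; simpl coord.
  apply sqrt_le_l. pose proof (Rabs_pos a); pose proof (Rabs_pos b); pose proof (Rabs_pos c); lra.
  assert (a^2 = Rabs a * Rabs a) by (rewrite <- Rabs_mult, Rabs_pos_eq by nra; ring).
  assert (b^2 = Rabs b * Rabs b) by (rewrite <- Rabs_mult, Rabs_pos_eq by nra; ring).
  assert (c^2 = Rabs c * Rabs c) by (rewrite <- Rabs_mult, Rabs_pos_eq by nra; ring).
  pose proof (Rabs_pos a); pose proof (Rabs_pos b); pose proof (Rabs_pos c); nra.
Qed.

Lemma pt_eq (a b c d e f : R) : a = d -> b = e -> c = f -> ((a,b),c) = ((d,e),f).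
Proof. intros; subst; reflexivity. Qed.

Lemma psub_shift i t x R0 : psub (shift i t x) R0 = shift i t (psub x R0).
Proof.
  destruct x as [[a b] c], R0 as [[d e] f]; destruct i as [|[|i]]; simpl; apply pt_eq; ring.
Qed.

Lemma pnorm_shift i t y :
  pnorm (shift i t y) = sqrt (pnorm y ^ 2 + 2 * t * coord i y + t ^ 2).
Proof.
  rewrite pnorm_sq. destruct y as [[a b] c]; destruct i as [|[|i]]; unfold pnorm; simpl; f_equal; ring.
Qed.

Lemma coord_sum y : coord 0 y ^2 + coord 1 y ^2 + coord 2 y ^2 = pnorm y ^ 2.
Proof. rewrite pnorm_sq; ring. Qed.

Lemma pdist_shift_self i t x : pdist (shift i t x) x = Rabs t.
Proof.
  destruct x as [[a b] c]; destruct i as [|[|i]]; unfold pdist, pnorm; simpl;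
  rewrite <- sqrt_Rsqr_abs; f_equal; unfold Rsqr; ring.
Qed.

Lemma pdist_shift i t x R0 : Rabs (pdist (shift i t x) R0 - pdist x R0) <= Rabs t.
Proof.
  pose proof (pdist_tri (shift i t x) x R0). pose proof (pdist_tri x (shift i t x) R0).
  rewrite pdist_shift_self in H. rewrite (pdist_sym x (shift i t x)), pdist_shift_self in H0.
  apply Rabs_le; lra.
Qed.

Definition inbox (c : pt) (h : R) (x : pt) : Prop :=
  Rabs (coord 0 x - coord 0 c) <= h /\ Rabs (coord 1 x - coord 1 c) <= h /\ Rabs (coord 2 x - coord 2 c) <= h.

Lemma pdist_inbox c h x : inbox c h x -> pdist x c <= 3 * h.
Proof.
  intros (H0 & H1 & H2). unfold pdist.
  eapply Rle_trans; [apply pnorm_le_abs|].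
  destruct x as [[a b] d], c as [[e f] g]; simpl in *. lra.
Qed.


Section EVT.
Variable (K : pt -> Prop) (f : pt -> R).

Definition Qp (X : pt -> Prop) : Prop :=
  forall y, K y -> forall e, 0 < e -> exists z, K z /\ X z /\ f y - e < f z.

Lemma Qp_mono (X Y : pt -> Prop) : (forall z, X z -> Y z) -> Qp X -> Qp Y.
Proof.
  intros HXY HQ y Ky e He. destruct (HQ y Ky e He) as (z & ? & ? & ?). exists z; auto.
Qed.

Lemma not_Qp X : ~ Qp X -> exists y e, K y /\ 0 < e /\ forall z, K z -> X z -> f z <= f y - e.
Proof.
  intros nQ. apply NNPP; intro C. apply nQ. intros y Ky e He.
  apply NNPP; intro C2. apply C. exists y, e. repeat split; auto.
  intros z Kz Xz. apply Rnot_lt_le. intro. apply C2. exists z; auto.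
Qed.

Lemma Qp_split (X Y1 Y2 : pt -> Prop) :
  (forall z, X z -> Y1 z \/ Y2 z) -> Qp X -> Qp Y1 \/ Qp Y2.
Proof.
  intros HS HQ. destruct (classic (Qp Y1)) as [?|n1]; auto.
  destruct (classic (Qp Y2)) as [?|n2]; auto. exfalso.
  destruct (not_Qp _ n1) as (y1 & e1 & K1 & E1 & H1).
  destruct (not_Qp _ n2) as (y2 & e2 & K2 & E2 & H2).
  destruct (Rle_or_lt (f y1 - e1) (f y2 - e2)) as [Hl|Hl].
  - destruct (HQ y2 K2 e2 E2) as (z & Kz & Xz & Fz).
    destruct (HS z Xz) as [Y|Y]; [specialize (H1 z Kz Y)|specialize (H2 z Kz Y)]; lra.
  - destruct (HQ y1 K1 e1 E1) as (z & Kz & Xz & Fz).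
    destruct (HS z Xz) as [Y|Y]; [specialize (H1 z Kz Y)|specialize (H2 z Kz Y)]; lra.
Qed.

Definition side (c : pt) (i : nat) (b : bool) (x : pt) : Prop :=
  if b then coord i c <= coord i x else coord i x <= coord i c.

Lemma Qp_side (X : pt -> Prop) c i : Qp X -> exists b, Qp (fun x => X x /\ side c i b x).
Proof.
  intros HQ. destruct (Qp_split X (fun x => X x /\ side c i true x) (fun x => X x /\ side c i false x)) as [H|H]; eauto.
  intros z Xz. unfold side. destruct (Rle_or_lt (coord i c) (coord i z)); [left|right]; split; auto; lra.
Qed.

Definition sgn (b : bool) : R := if b then 1 else -1.
Definition hc (c : pt) (h : R) (b0 b1 b2 : bool) : pt :=
  ((coord 0 c + sgn b0 * (h/2), coord 1 c + sgn b1 * (h/2)), coord 2 c + sgn b2 * (h/2)).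

Lemma side_box1 c h b x i : Rabs (coord i x - coord i c) <= h -> side c i b x ->
  Rabs (coord i x - (coord i c + sgn b * (h/2))) <= h/2.
Proof.
  unfold side, sgn; intros H1 H2. apply Rabs_le. apply Rabs_le_between in H1.
  destruct b; lra.
Qed.

Lemma Qp_halve c h : 0 <= h -> Qp (inbox c h) ->
  exists c', (Rabs (coord 0 c' - coord 0 c) <= h/2 /\ Rabs (coord 1 c' - coord 1 c) <= h/2 /\
              Rabs (coord 2 c' - coord 2 c) <= h/2) /\ Qp (inbox c' (h/2)).
Proof.
  intros Hh HQ.
  destruct (Qp_side _ c 0 HQ) as [b0 H0].
  destruct (Qp_side _ c 1 H0) as [b1 H1].
  destruct (Qp_side _ c 2 H1) as [b2 H2].
  exists (hc c h b0 b1 b2). split.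
  - unfold hc; simpl. destruct c as [[c0 c1] c2]; simpl.
    unfold sgn; destruct b0, b1, b2; repeat split; apply Rabs_le; lra.
  - eapply Qp_mono; [|exact H2]. intros x [[[Hb S0] S1] S2]. destruct Hb as (B0 & B1 & B2).
    unfold inbox, hc; simpl.
    pose proof (side_box1 c h b0 x 0 B0 S0). pose proof (side_box1 c h b1 x 1 B1 S1).
    pose proof (side_box1 c h b2 x 2 B2 S2). simpl in *. destruct x as [[? ?] ?]. simpl in *. auto.
Qed.

Lemma inbox_weak c h h' x : h <= h' -> inbox c h x -> inbox c h' x.
Proof. unfold inbox; intros; lra. Qed.

Variable c0 : pt. Variable h0 : R. Hypothesis Hh0 : 0 <= h0.
Hypothesis Kbox : forall x, K x -> inbox c0 h0 x.

Definition hn (n : nat) := h0 / 2 ^ n.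
Definition Pstep (c : pt) (n : nat) (c' : pt) :=
  (Rabs (coord 0 c' - coord 0 c) <= hn n / 2 /\ Rabs (coord 1 c' - coord 1 c) <= hn n / 2 /\ Rabs (coord 2 c' - coord 2 c) <= hn n / 2) /\ Qp (inbox c' (hn n / 2)).
Fixpoint cs (n : nat) : pt :=
  match n with O => c0 | S m => epsilon (inhabits c0) (Pstep (cs m) m) end.

Lemma hn_S n : hn (S n) = hn n / 2.
Proof. unfold hn; simpl. field. apply pow_nonzero; lra. Qed.
Lemma hn_pos n : 0 <= hn n.
Proof. unfold hn. apply Rdiv_le_0_compat; auto. apply pow_lt; lra. Qed.

Lemma cs_spec n : Qp (inbox (cs n) (hn n)) /\ Pstep (cs n) n (cs (S n)).
Proof.
  assert (HQ : forall n, Qp (inbox (cs n) (hn n))).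
  { induction n0.
    - simpl. intros y Ky e He. exists y. split; auto. split; [|lra].
      unfold hn; simpl. replace (h0/1) with h0 by field. auto.
    - simpl. pose proof (epsilon_spec (inhabits c0) (Pstep (cs n0) n0) ltac:(unfold Pstep; exact (Qp_halve _ _ (hn_pos n0) IHn0))) as [_ H].
      rewrite hn_S. exact H. }
  split; auto. simpl. apply (epsilon_spec (inhabits c0) (Pstep (cs n) n)).
  unfold Pstep. apply Qp_halve; auto. apply hn_pos.
Qed.

Definition Lo i n := coord i (cs n) - hn n.
Definition Up i n := coord i (cs n) + hn n.

Lemma cs_step i n : Rabs (coord i (cs (S n)) - coord i (cs n)) <= hn n / 2.
Proof.
  destruct (cs_spec n) as [_ [(A0 & A1 & A2) _]].
  destruct i as [|[|[|i]]]; auto.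
Qed.

Lemma LU_step i n : Lo i n <= Lo i (S n) /\ Up i (S n) <= Up i n /\ Lo i n <= Up i n.
Proof.
  pose proof (cs_step i n) as H. apply Rabs_le_between in H.
  unfold Lo, Up. rewrite hn_S. pose proof (hn_pos n). lra.
Qed.

Lemma LU_mono i n k : Lo i n <= Lo i (n + k) /\ Up i (n + k) <= Up i n.
Proof.
  induction k.
  - rewrite Nat.add_0_r. lra.
  - replace (n + S k)%nat with (S (n + k)) by lia.
    pose proof (LU_step i (n + k)). lra.
Qed.

Lemma L_le_U i m n : Lo i m <= Up i n.
Proof.
  destruct (Nat.le_ge_cases m n) as [H|H].
  - destruct (LU_mono i m (n - m)) as [A _]. replace (m + (n - m))%nat with n in A by lia.
    pose proof (LU_step i n). lra.
  - destruct (LU_mono i n (m - n)) as [_ A]. replace (n + (m - n))%nat with m in A by lia.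
    pose proof (LU_step i m). lra.
Qed.

Definition limc (i : nat) : R.
Proof.
  destruct (completeness (fun v => exists n, v = Lo i n)) as [l _].
  - exists (Up i 0); intros v [n ->]. apply L_le_U.
  - exists (Lo i 0); eauto.
  - exact l.
Defined.

Lemma limc_spec i n : Lo i n <= limc i <= Up i n.
Proof.
  unfold limc. destruct (completeness _ _ _) as [l [Hub Hl]]. split.
  - apply Hub. eauto.
  - apply Hl. intros v [m ->]. apply L_le_U.
Qed.

Definition xstar : pt := ((limc 0, limc 1), limc 2).

Lemma xstar_near n z : inbox (cs n) (hn n) z -> inbox xstar (2 * hn n) z.
Proof.
  unfold inbox. intros (B0 & B1 & B2).
  pose proof (limc_spec 0 n); pose proof (limc_spec 1 n); pose proof (limc_spec 2 n).
  unfold Lo, Up in *. unfold xstar; simpl coord.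
  apply Rabs_le_between in B0; apply Rabs_le_between in B1; apply Rabs_le_between in B2.
  repeat split; apply Rabs_le; lra.
Qed.

Lemma pow2_ge n : INR n + 1 <= 2 ^ n.
Proof.
  induction n. simpl; lra. rewrite S_INR. simpl. assert (1 <= 2^n) by (apply pow_R1_Rle; lra). lra.
Qed.

Lemma hn_small d : 0 < d -> exists n, 2 * hn n < d.
Proof.
  intros Hd. destruct (archimed (2 * h0 / d)) as [H1 _].
  destruct (Rle_or_lt 0 (IZR (up (2 * h0 / d)))) as [H0|H0].
  2:{ exists O. unfold hn. simpl. assert (2*h0/d < 0) by lra.
      assert (2*h0 < 0). { apply Rmult_lt_reg_r with (/d). apply Rinv_0_lt_compat; auto.
      rewrite Rmult_0_l. exact H. } lra. }
  exists (Z.to_nat (up (2 * h0 / d))).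
  pose proof (pow2_ge (Z.to_nat (up (2 * h0 / d)))).
  rewrite INR_IZR_INZ, Z2Nat.id in H by (apply le_0_IZR; lra).
  unfold hn. assert (0 < 2 ^ Z.to_nat (up (2 * h0 / d))) by (apply pow_lt; lra).
  apply Rmult_lt_reg_r with (2 ^ Z.to_nat (up (2 * h0 / d))); auto.
  replace (2 * (h0 / 2 ^ Z.to_nat (up (2 * h0 / d))) * 2 ^ Z.to_nat (up (2 * h0 / d))) with (2*h0) by (field; lra).
  assert (2 * h0 < d * (IZR (up (2 * h0 / d)))).
  { set (q := 2*h0/d) in *. replace (2*h0) with (d * q) by (unfold q; field; lra). apply Rmult_lt_compat_l; auto. }
  nra.
Qed.

Hypothesis Kne : exists x, K x.
Hypothesis Kclosed : forall x, ~ K x -> exists d, 0 < d /\ forall y, inbox x d y -> ~ K y.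
Hypothesis fusc : forall x, K x -> forall e, 0 < e ->
  exists d, 0 < d /\ forall y, K y -> inbox x d y -> f y < f x + e.

Theorem evt : exists x, K x /\ forall y, K y -> f y <= f x.
Proof.
  assert (Kx : K xstar).
  { apply NNPP. intros nK. destruct (Kclosed _ nK) as (d & Hd & Hn).
    destruct (hn_small d Hd) as [n Hn'].
    destruct Kne as [y0 Ky0]. destruct (proj1 (cs_spec n) y0 Ky0 1 Rlt_0_1) as (z & Kz & Bz & _).
    apply (Hn z); auto. eapply inbox_weak; [|apply xstar_near; eauto]. lra. }
  exists xstar. split; auto. intros y Ky. apply Rnot_lt_le. intros Hlt.
  set (e := (f y - f xstar) / 2).
  assert (He : 0 < e) by (unfold e; lra).
  destruct (fusc xstar Kx e He) as (d & Hd & Hc).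
  destruct (hn_small d Hd) as [n Hn'].
  destruct (proj1 (cs_spec n) y Ky e He) as (z & Kz & Bz & Fz).
  assert (inbox xstar d z) by (eapply inbox_weak; [|apply xstar_near; eauto]; lra).
  specialize (Hc z Kz H). unfold e in *. lra.
Qed.
End EVT.


Lemma is_derive_Rminus (f g : R -> R) x a b :
  is_derive f x a -> is_derive g x b -> is_derive (fun t => f t - g t) x (a - b).
Proof. intros. apply (is_derive_minus f g x a b); auto. Qed.

Lemma is_derive_Rplus (f g : R -> R) x a b :
  is_derive f x a -> is_derive g x b -> is_derive (fun t => f t + g t) x (a + b).
Proof. intros. apply (is_derive_plus f g x a b); auto. Qed.

Lemma second_deriv_cmp (g1 g2 g1' g2' : R -> R) (d1 d2 dl : R) :
  0 < dl ->
  (forall t, Rabs t < dl -> is_derive g1 t (g1' t) /\ is_derive g2 t (g2' t)) ->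
  is_derive g1' 0 d1 -> is_derive g2' 0 d2 ->
  (forall t, Rabs t < dl -> g1 t - g2 t <= g1 0 - g2 0) ->
  d1 <= d2.
Proof.
  intros Hdl Hd Hd1 Hd2 Hmax. apply Rnot_lt_le. intro Hlt.
  set (h := fun t => g1 t - g2 t). set (h' := fun t => g1' t - g2' t).
  set (D := d1 - d2). assert (HD : 0 < D) by (unfold D; lra).
  assert (Hh : forall t, Rabs t < dl -> derivable_pt_lim h t (h' t)).
  { intros t Ht. apply is_derive_Reals. destruct (Hd t Ht). apply is_derive_Rminus; auto. }
  assert (Hh' : derivable_pt_lim h' 0 D).
  { apply is_derive_Reals. apply is_derive_Rminus; auto. }
  destruct (Hh' (D/2) ltac:(lra)) as [d0 Hd0].
  set (t0 := Rmin dl d0 / 2).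
  assert (Ht0 : 0 < t0) by (unfold t0; pose proof (Rmin_pos dl d0 Hdl (cond_pos d0)); lra).
  assert (Ht0' : t0 < dl /\ t0 < d0).
  { unfold t0. pose proof (Rmin_l dl d0); pose proof (Rmin_r dl d0). pose proof (cond_pos d0).
    split; lra. }
  assert (Hslope : forall c, c <> 0 -> Rabs c < d0 -> Rabs ((h' (0 + c) - h' 0) / c - D) < D / 2).
  { intros c Hc Hc'. apply Hd0; auto. }
  destruct (Rle_or_lt 0 (h' 0)) as [Hp|Hn].
  - destruct (MVT_cor2 h h' 0 t0 Ht0) as (c & Hc & Hc2).
    { intros c Hc. apply Hh. rewrite Rabs_pos_eq by lra. lra. }
    specialize (Hslope c ltac:(lra) ltac:(rewrite Rabs_pos_eq by lra; lra)).
    rewrite Rplus_0_l in Hslope. apply Rabs_lt_between in Hslope.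
    assert (h' c > 0).
    { destruct Hslope as [Hs _]. 
      assert ((h' c - h' 0) / c * c = h' c - h' 0) by (field; lra).
      assert (D / 2 * c < (h' c - h' 0) / c * c) by (apply Rmult_lt_compat_r; lra).
      nra. }
    assert (h t0 - h 0 > 0) by (rewrite Hc; nra).
    specialize (Hmax t0 ltac:(rewrite Rabs_pos_eq by lra; lra)). unfold h in *. lra.
  - destruct (MVT_cor2 h h' (-t0) 0 ltac:(lra)) as (c & Hc & Hc2).
    { intros c Hc. apply Hh. rewrite Rabs_left1 by lra. lra. }
    specialize (Hslope c ltac:(lra) ltac:(rewrite Rabs_left by lra; lra)).
    rewrite Rplus_0_l in Hslope. apply Rabs_lt_between in Hslope.
    assert (h' c < 0).
    { destruct Hslope as [Hs _].
      assert ((h' c - h' 0) / c * c = h' c - h' 0) by (field; lra).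
      set (q := (h' c - h' 0) / c) in *.
      assert ((q - D/2) * c < 0) by (nra).
      nra. }
    assert (h 0 - h (-t0) < 0) by (rewrite Hc; nra).
    specialize (Hmax (-t0) ltac:(rewrite Rabs_Ropp, Rabs_pos_eq by lra; lra)). unfold h in *. lra.
Qed.


Lemma is_derive_eq (f : R -> R) x l l' : is_derive f x l -> l = l' -> is_derive f x l'.
Proof. intros; subst; auto. Qed.

Lemma is_derive_Rmult (f g : R -> R) x a b :
  is_derive f x a -> is_derive g x b -> is_derive (fun t => f t * g t) x (a * g x + f x * b).
Proof. intros. apply (is_derive_mult f g x a b); auto. intros; apply Rmult_comm. Qed.

Lemma is_derive_Rcomp (f g : R -> R) x a b :
  is_derive f (g x) a -> is_derive g x b -> is_derive (fun t => f (g t)) x (b * a).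
Proof. intros. apply (is_derive_comp f g x a b); auto. Qed.

Ltac req := match goal with |- @eq _ ?a ?b => change (@eq R a b) end.

Section Radial.
Variables (F F1 F2 : R -> R) (lo : R).
Hypothesis Hlo : 0 <= lo.
Hypothesis HF : forall rho, lo < rho -> is_derive F rho (F1 rho) /\ is_derive F1 rho (F2 rho).

Definition Qf (y : pt) (i : nat) (t : R) := pnorm y ^ 2 + 2 * t * coord i y + t ^ 2.
Definition Sf (y : pt) (i : nat) (t : R) := sqrt (Qf y i t).

Lemma Sf_lower y i t : pnorm y - Rabs t <= Sf y i t.
Proof.
  unfold Sf, Qf. destruct (Rle_or_lt (pnorm y - Rabs t) 0) as [H|H].
  - pose proof (sqrt_pos (pnorm y ^ 2 + 2 * t * coord i y + t ^ 2)). lra.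
  - rewrite <- (sqrt_pow2 (pnorm y - Rabs t)) by lra. apply sqrt_le_1_alt.
    pose proof (coord_le i y). pose proof (Rabs_pos (coord i y)).
    assert (t * coord i y >= - (Rabs t * pnorm y)).
    { assert (Rabs (t * coord i y) <= Rabs t * pnorm y).
      { rewrite Rabs_mult. apply Rmult_le_compat_l; auto. apply Rabs_pos. }
      apply Rabs_le_between in H2. lra. }
    assert (Rabs t ^ 2 = t ^ 2) by (rewrite <- Rsqr_pow2, <- Rsqr_abs, Rsqr_pow2; auto).
    nra.
Qed.

Lemma Sf_0 y i : Sf y i 0 = pnorm y.
Proof. unfold Sf, Qf. replace (pnorm y ^ 2 + 2 * 0 * coord i y + 0 ^ 2) with (pnorm y ^ 2) by ring.
  apply sqrt_pow2, pnorm_pos. Qed.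

Lemma Sf_deriv y i t : 0 < Qf y i t -> is_derive (Sf y i) t ((coord i y + t) / Sf y i t).
Proof.
  intros HQ. unfold Sf.
  assert (HD : is_derive (Qf y i) t (2 * coord i y + 2 * t)) by (unfold Qf; auto_derive; [auto | ring]).
  eapply is_derive_eq.
  - apply is_derive_sqrt; eauto.
  - req. field. apply Rgt_not_eq, sqrt_lt_R0. auto.
Qed.

Definition G1 (y : pt) (i : nat) (t : R) := F1 (Sf y i t) * ((coord i y + t) * / Sf y i t).

Lemma radial_axis y i : lo < pnorm y ->
  (forall t, Rabs t < pnorm y - lo -> is_derive (fun t => F (pnorm (shift i t y))) t (G1 y i t)) /\
  is_derive (G1 y i) 0 (F2 (pnorm y) * (coord i y / pnorm y) ^ 2 +
                        F1 (pnorm y) * (pnorm y ^ 2 - coord i y ^ 2) / pnorm y ^ 3).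
Proof.
  intros Hy.
  assert (HS : forall t, Rabs t < pnorm y - lo -> lo < Sf y i t /\ 0 < Qf y i t).
  { intros t Ht. pose proof (Sf_lower y i t). split. lra.
    destruct (Rle_or_lt (Qf y i t) 0) as [Hq|Hq]; auto.
    unfold Sf in H. rewrite sqrt_neg_0 in H by auto. lra. }
  split.
  - intros t Ht. destruct (HS t Ht) as [HS1 HS2].
    apply is_derive_ext with (fun t => F (Sf y i t)).
    { intros u. rewrite pnorm_shift. reflexivity. }
    eapply is_derive_eq. apply is_derive_Rcomp. apply (HF _ HS1). apply Sf_deriv; auto.
    unfold G1. req. unfold Rdiv. ring.
  - assert (H0 : Rabs 0 < pnorm y - lo) by (rewrite Rabs_R0; lra).
    destruct (HS 0 H0) as [HS1 HS2].
    rewrite Sf_0 in HS1.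
    unfold G1. eapply is_derive_eq.
    + apply is_derive_Rmult.
      * apply is_derive_Rcomp. rewrite Sf_0. apply (HF _ HS1). apply Sf_deriv; auto.
      * apply is_derive_Rmult. auto_derive; auto.
        apply is_derive_inv. apply Sf_deriv; auto. rewrite Sf_0. lra.
    + req. rewrite !Sf_0. field. lra.
Qed.
End Radial.


Lemma is_derive_Rconst (c t : R) : is_derive (fun _ => c) t 0.
Proof. auto_derive; auto. Qed.

Lemma sum_derive (l : list nat) (g g' : nat -> R -> R) t :
  (forall j, In j l -> is_derive (g j) t (g' j t)) ->
  is_derive (fun t => fold_right Rplus 0 (map (fun j => g j t) l)) t
            (fold_right Rplus 0 (map (fun j => g' j t) l)).
Proof.
  induction l as [|a l IH]; intros H; simpl.
  - apply is_derive_Rconst.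
  - apply is_derive_Rplus. apply H; simpl; auto. apply IH. intros; apply H; simpl; auto.
Qed.

Lemma sum_plus (l : list nat) (a b : nat -> R) :
  fold_right Rplus 0 (map (fun j => a j + b j) l) =
  fold_right Rplus 0 (map a l) + fold_right Rplus 0 (map b l).
Proof. induction l; simpl; [ring|rewrite IHl; ring]. Qed.

Lemma sum_ext (l : list nat) (a b : nat -> R) :
  (forall j, In j l -> a j = b j) ->
  fold_right Rplus 0 (map a l) = fold_right Rplus 0 (map b l).
Proof. induction l; simpl; intros H; auto. rewrite H, IHl; auto. Qed.

Lemma sum_le (l : list nat) (a b : nat -> R) :
  (forall j, In j l -> a j <= b j) ->
  fold_right Rplus 0 (map a l) <= fold_right Rplus 0 (map b l).
Proof. induction l; simpl; intros H; [lra|]. pose proof (H a0 (or_introl eq_refl)).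
  assert (fold_right Rplus 0 (map a l) <= fold_right Rplus 0 (map b l)) by auto. lra. Qed.

Lemma exists_min (K : nat) (h : nat -> R) :
  (forall j, (j < K)%nat -> 0 < h j) -> exists d, 0 < d /\ forall j, (j < K)%nat -> d <= h j.
Proof.
  induction K; intros H.
  - exists 1. split; [lra|]. intros; lia.
  - destruct IHK as (d & Hd & Hd2). intros; apply H; lia.
    exists (Rmin d (h K)). split. apply Rmin_pos; auto.
    intros j Hj. destruct (Nat.eq_dec j K) as [->|Hn].
    apply Rmin_r. eapply Rle_trans; [apply Rmin_l|]. apply Hd2; lia.
Qed.

Lemma shift_shift i t u x : shift i u (shift i t x) = shift i (t + u) x.
Proof. destruct x as [[a b] c]; destruct i as [|[|i]]; simpl; apply pt_eq; ring. Qed.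

Section Cmp.
Variables (K : nat) (Rs : nat -> pt) (r : R).
Hypothesis Hr : 0 <= r.
Variables (F F1 F2 : nat -> R -> R) (C0 : R).
Hypothesis HF : forall j, (j < K)%nat -> forall rho, r < rho ->
  is_derive (F j) rho (F1 j rho) /\ is_derive (F1 j) rho (F2 j rho).

Definition Vf (x : pt) := sum_nuclei K (fun j => F j (pdist x (Rs j))) + C0.
Definition LapV (x : pt) :=
  sum_nuclei K (fun j => F2 j (pdist x (Rs j)) + 2 * F1 j (pdist x (Rs j)) / pdist x (Rs j)).

Lemma in_seq_lt j : In j (seq 0 K) -> (j < K)%nat.
Proof. intros H. apply in_seq in H. lia. Qed.

Lemma Vf_axis x0 : A_set K Rs r x0 ->
  exists dl, 0 < dl /\ forall i, exists V1 D,
    (forall t, Rabs t < dl -> is_derive (fun t => Vf (shift i t x0)) t (V1 t)) /\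
    is_derive V1 0 (D) /\
    D = sum_nuclei K (fun j =>
        F2 j (pdist x0 (Rs j)) * (coord i (psub x0 (Rs j)) / pdist x0 (Rs j)) ^ 2 +
        F1 j (pdist x0 (Rs j)) * (pdist x0 (Rs j) ^ 2 - coord i (psub x0 (Rs j)) ^ 2) / pdist x0 (Rs j) ^ 3).
Proof.
  intros HA.
  destruct (exists_min K (fun j => pdist x0 (Rs j) - r)) as (dl & Hdl & Hdl2).
  { intros j Hj. specialize (HA j Hj). lra. }
  exists dl. split; auto. intros i.
  exists (fun t => sum_nuclei K (fun j => G1 (F1 j) (psub x0 (Rs j)) i t)).
  eexists. split; [|split; [|reflexivity]].
  - intros t Ht. unfold Vf, sum_nuclei.
    apply (is_derive_ext (fun t => fold_right Rplus 0 (map (fun j => F j (pnorm (shift i t (psub x0 (Rs j))))) (seq 0 K)) + C0)).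
    { intros u. f_equal. apply sum_ext. intros j _. unfold pdist. rewrite psub_shift. reflexivity. }
    eapply is_derive_eq; [apply is_derive_Rplus; [|apply is_derive_Rconst]|].
    + apply (sum_derive (seq 0 K) (fun j t => F j (pnorm (shift i t (psub x0 (Rs j))))) (fun j t => G1 (F1 j) (psub x0 (Rs j)) i t)).
      intros j Hj. apply in_seq_lt in Hj.
      destruct (radial_axis (F j) (F1 j) (F2 j) r Hr (HF j Hj) (psub x0 (Rs j)) i) as [A _].
      apply HA; auto. apply A. specialize (Hdl2 j Hj). unfold pdist in Hdl2. lra.
    + req. ring.
  - unfold sum_nuclei.
    apply (sum_derive (seq 0 K) (fun j t => G1 (F1 j) (psub x0 (Rs j)) i t) (fun j _ =>
        F2 j (pdist x0 (Rs j)) * (coord i (psub x0 (Rs j)) / pdist x0 (Rs j)) ^ 2 +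
        F1 j (pdist x0 (Rs j)) * (pdist x0 (Rs j) ^ 2 - coord i (psub x0 (Rs j)) ^ 2) / pdist x0 (Rs j) ^ 3)).
    intros j Hj. apply in_seq_lt in Hj.
    destruct (radial_axis (F j) (F1 j) (F2 j) r Hr (HF j Hj) (psub x0 (Rs j)) i) as [_ B].
    apply HA; auto. exact B.
Qed.

Lemma lap_sum x0 : A_set K Rs r x0 ->
  sum_nuclei K (fun j =>
        F2 j (pdist x0 (Rs j)) * (coord 0 (psub x0 (Rs j)) / pdist x0 (Rs j)) ^ 2 +
        F1 j (pdist x0 (Rs j)) * (pdist x0 (Rs j) ^ 2 - coord 0 (psub x0 (Rs j)) ^ 2) / pdist x0 (Rs j) ^ 3) +
  sum_nuclei K (fun j =>
        F2 j (pdist x0 (Rs j)) * (coord 1 (psub x0 (Rs j)) / pdist x0 (Rs j)) ^ 2 +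
        F1 j (pdist x0 (Rs j)) * (pdist x0 (Rs j) ^ 2 - coord 1 (psub x0 (Rs j)) ^ 2) / pdist x0 (Rs j) ^ 3) +
  sum_nuclei K (fun j =>
        F2 j (pdist x0 (Rs j)) * (coord 2 (psub x0 (Rs j)) / pdist x0 (Rs j)) ^ 2 +
        F1 j (pdist x0 (Rs j)) * (pdist x0 (Rs j) ^ 2 - coord 2 (psub x0 (Rs j)) ^ 2) / pdist x0 (Rs j) ^ 3)
  = LapV x0.
Proof.
  intros HA. unfold sum_nuclei, LapV. rewrite <- !sum_plus. apply sum_ext.
  intros j Hj. apply in_seq_lt in Hj. specialize (HA j Hj).
  pose proof (coord_sum (psub x0 (Rs j))) as E. unfold pdist in *.
  set (rho := pnorm (psub x0 (Rs j))) in *.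
  set (c0 := coord 0 (psub x0 (Rs j))) in *. set (c1 := coord 1 (psub x0 (Rs j))) in *.
  set (c2 := coord 2 (psub x0 (Rs j))) in *.
  assert (Hrho : rho <> 0) by lra.
  replace (F2 j rho * (c0 / rho) ^ 2 + F1 j rho * (rho ^ 2 - c0 ^ 2) / rho ^ 3 +
   (F2 j rho * (c1 / rho) ^ 2 + F1 j rho * (rho ^ 2 - c1 ^ 2) / rho ^ 3) +
   (F2 j rho * (c2 / rho) ^ 2 + F1 j rho * (rho ^ 2 - c2 ^ 2) / rho ^ 3))
   with (F2 j rho * ((c0^2+c1^2+c2^2) / rho ^ 2) + F1 j rho * (3 * rho ^ 2 - (c0^2+c1^2+c2^2)) / rho ^ 3)
   by (field; auto).
  rewrite E. field. auto.
Qed.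
End Cmp.

Lemma phi_axis K Rs r phi x0 i : C2_on (A_set K Rs r) phi -> A_set K Rs r x0 -> (i < 3)%nat ->
  exists dl, 0 < dl /\
   (forall t, Rabs t < dl -> is_derive (fun t => phi (shift i t x0)) t (pd i phi (shift i t x0))) /\
   is_derive (fun t => pd i phi (shift i t x0)) 0 (pd i (pd i phi) x0).
Proof.
  intros HC HA Hi.
  destruct (exists_min K (fun j => pdist x0 (Rs j) - r)) as (dl & Hdl & Hdl2).
  { intros j Hj. specialize (HA j Hj). lra. }
  exists dl. split; auto. split.
  - intros t Ht.
    assert (HA' : A_set K Rs r (shift i t x0)).
    { intros j Hj. pose proof (pdist_shift i t x0 (Rs j)). apply Rabs_le_between in H.
      specialize (Hdl2 j Hj). lra. }
    destruct (HC _ HA') as [_ H]. destruct (H i i Hi Hi) as [Hd _].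
    apply Derive_correct in Hd.
    apply (is_derive_ext (fun v => (fun u => phi (shift i u (shift i t x0))) (v - t))).
    { intros v. simpl. rewrite shift_shift, Rplus_minus. reflexivity. }
    eapply is_derive_eq.
    apply (is_derive_Rcomp (fun u => phi (shift i u (shift i t x0))) (fun v => v - t)).
    replace (t - t) with 0 by ring. exact Hd.
    auto_derive; auto. req. unfold pd. apply Rmult_1_l.
  - destruct (HC _ HA) as [_ H]. destruct (H i i Hi Hi) as [_ [Hd _]].
    apply Derive_correct in Hd. exact Hd.
Qed.

Lemma cmp_gen K Rs r (Hr : 0 <= r) (F F1 F2 : nat -> R -> R) (C0 : R) (phi : pt -> R) x0 (sgn : bool) :
  (forall j, (j < K)%nat -> forall rho, r < rho ->
     is_derive (F j) rho (F1 j rho) /\ is_derive (F1 j) rho (F2 j rho)) ->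
  C2_on (A_set K Rs r) phi -> A_set K Rs r x0 ->
  (exists dl, 0 < dl /\ forall i t, (i < 3)%nat -> Rabs t < dl ->
     if sgn then Vf K Rs F C0 (shift i t x0) - phi (shift i t x0) <= Vf K Rs F C0 x0 - phi x0
     else phi (shift i t x0) - Vf K Rs F C0 (shift i t x0) <= phi x0 - Vf K Rs F C0 x0) ->
  if sgn then LapV K Rs F1 F2 x0 <= laplacian phi x0 else laplacian phi x0 <= LapV K Rs F1 F2 x0.
Proof.
  intros HF HC HA (dm & Hdm & Hmax).
  destruct (Vf_axis K Rs r Hr F F1 F2 C0 HF x0 HA) as (dv & Hdv & HV).
  assert (Hi : forall i, (i < 3)%nat -> exists D,
     D = sum_nuclei K (fun j =>
        F2 j (pdist x0 (Rs j)) * (coord i (psub x0 (Rs j)) / pdist x0 (Rs j)) ^ 2 +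
        F1 j (pdist x0 (Rs j)) * (pdist x0 (Rs j) ^ 2 - coord i (psub x0 (Rs j)) ^ 2) / pdist x0 (Rs j) ^ 3) /\
     if sgn then D <= pd i (pd i phi) x0 else pd i (pd i phi) x0 <= D).
  { intros i Hi. destruct (HV i) as (V1 & D & HV1 & HV2 & HD).
    destruct (phi_axis K Rs r phi x0 i HC HA Hi) as (dp & Hdp & Hp1 & Hp2).
    exists D. split; auto.
    set (dl := Rmin dm (Rmin dv dp)).
    assert (Hdl : 0 < dl) by (unfold dl; repeat apply Rmin_pos; auto).
    assert (Hdl1 : dl <= dm /\ dl <= dv /\ dl <= dp).
    { unfold dl. pose proof (Rmin_l dm (Rmin dv dp)). pose proof (Rmin_r dm (Rmin dv dp)).
      pose proof (Rmin_l dv dp). pose proof (Rmin_r dv dp). lra. }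
    destruct sgn.
    - apply (second_deriv_cmp (fun t => Vf K Rs F C0 (shift i t x0)) (fun t => phi (shift i t x0))
              V1 (fun t => pd i phi (shift i t x0)) D (pd i (pd i phi) x0) dl); auto.
      + intros t Ht. split; [apply HV1|apply Hp1]; lra.
      + intros t Ht. pose proof (Hmax i t Hi ltac:(lra)). simpl in H.
        replace (shift i 0 x0) with x0; auto. destruct x0 as [[? ?] ?]; destruct i as [|[|?]]; simpl; apply pt_eq; ring.
    - apply (second_deriv_cmp (fun t => phi (shift i t x0)) (fun t => Vf K Rs F C0 (shift i t x0))
              (fun t => pd i phi (shift i t x0)) V1 (pd i (pd i phi) x0) D dl); auto.
      + intros t Ht. split; [apply Hp1|apply HV1]; lra.
      + intros t Ht. pose proof (Hmax i t Hi ltac:(lra)). simpl in H.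
        replace (shift i 0 x0) with x0; auto. destruct x0 as [[? ?] ?]; destruct i as [|[|?]]; simpl; apply pt_eq; ring. }
  destruct (Hi 0%nat ltac:(lia)) as (D0 & E0 & H0).
  destruct (Hi 1%nat ltac:(lia)) as (D1 & E1 & H1).
  destruct (Hi 2%nat ltac:(lia)) as (D2 & E2 & H2).
  rewrite <- (lap_sum K Rs r Hr F1 F2 x0 HA). rewrite <- E0, <- E1, <- E2.
  unfold laplacian. destruct sgn; lra.
Qed.



Lemma ballR (a b d : R) : Rabs (b - a) < d -> ball a d b.
Proof. intros H. unfold ball; simpl. unfold AbsRing_ball, abs, minus, plus, opp; simpl. exact H. Qed.

Lemma inbox_ball (x y : pt) (d : R) : 0 < d -> inbox x (d/2) y -> ball x d y.
Proof.
  destruct x as [[a b] c], y as [[a' b'] c']. unfold inbox; simpl. intros Hd (H0 & H1 & H2).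
  hnf. split. hnf. split. all: apply ballR; simpl; lra.
Qed.

Lemma cont_eps (phi : pt -> R) x : continuous phi x ->
  forall e, 0 < e -> exists d, 0 < d /\ forall y, inbox x d y -> Rabs (phi y - phi x) < e.
Proof.
  intros Hc e He. unfold continuous, filterlim, filter_le, filtermap in Hc.
  destruct (Hc (fun z => ball (phi x) e z)) as [d Hd].
  { exists (mkposreal e He). intros; auto. }
  exists (d / 2). split. pose proof (cond_pos d); lra.
  intros y Hy. specialize (Hd y (inbox_ball x y d (cond_pos d) Hy)).
  unfold ball in Hd; simpl in Hd. unfold AbsRing_ball, abs, minus, plus, opp in Hd; simpl in Hd. exact Hd.
Qed.

Lemma cont_eps_R (f : R -> R) x : continuous f x ->
  forall e, 0 < e -> exists d, 0 < d /\ forall y, Rabs (y - x) < d -> Rabs (f y - f x) < e.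
Proof.
  intros Hc e He. unfold continuous, filterlim, filter_le, filtermap in Hc.
  destruct (Hc (fun z => ball (f x) e z)) as [d Hd].
  { exists (mkposreal e He). intros; auto. }
  exists d. split. apply cond_pos.
  intros y Hy. specialize (Hd y (ballR _ _ _ Hy)).
  unfold ball in Hd; simpl in Hd. unfold AbsRing_ball, abs, minus, plus, opp in Hd; simpl in Hd. exact Hd.
Qed.

Definition origin : pt := ((0,0),0).
Lemma pdist_origin y : pdist y origin = pnorm y.
Proof. destruct y as [[a b] c]. unfold pdist, psub, pnorm, origin. f_equal. ring. Qed.

Lemma pnorm_tri x y : pnorm x <= pdist x y + pnorm y.
Proof. rewrite <- !pdist_origin. apply pdist_tri. Qed.

Lemma pdist_lip x y R0 : Rabs (pdist y R0 - pdist x R0) <= pdist y x.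
Proof.
  pose proof (pdist_tri y x R0). pose proof (pdist_tri x y R0). rewrite (pdist_sym x y) in H0.
  apply Rabs_le; lra.
Qed.

Definition clA K Rs s x := forall j, (j < K)%nat -> s <= pdist x (Rs j).

Lemma MP K Rs s (w : pt -> R) :
  (forall x, clA K Rs s x -> forall e, 0 < e -> exists d, 0 < d /\
      forall y, clA K Rs s y -> inbox x d y -> w y < w x + e) ->
  (forall x, bdA K Rs s x -> w x <= 0) ->
  (forall e, 0 < e -> exists M, forall x, clA K Rs s x -> M < pnorm x -> w x < e) ->
  (forall x0, A_set K Rs s x0 -> 0 < w x0 -> (forall y, clA K Rs s y -> w y <= w x0) -> False) ->
  forall x, A_set K Rs s x -> w x <= 0.
Proof.
  intros Hc Hb Hinf Hloc x1 Hx1. apply Rnot_lt_le. intros Hw1.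
  destruct (Hinf (w x1) Hw1) as [M HM].
  set (M' := Rmax M (pnorm x1)).
  set (KS := fun x => clA K Rs s x /\ pnorm x <= M').
  assert (Hcl1 : clA K Rs s x1) by (intros j Hj; specialize (Hx1 j Hj); lra).
  destruct (evt KS w origin M') as (x0 & [Hx0 Hx0'] & Hmax).
  - unfold M'. pose proof (pnorm_pos x1). pose proof (Rmax_r M (pnorm x1)). lra.
  - intros x [_ Hx]. unfold inbox, origin; simpl.
    pose proof (coord_le 0 x); pose proof (coord_le 1 x); pose proof (coord_le 2 x).
    destruct x as [[a b] c]; simpl in *. rewrite !Rminus_0_r. repeat split; lra.
  - exists x1. split; auto. apply Rmax_r.
  - intros x Hn. unfold KS in Hn. apply not_and_or in Hn. destruct Hn as [Hn|Hn].
    + unfold clA in Hn. apply not_all_ex_not in Hn. destruct Hn as [j Hj].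
      apply imply_to_and in Hj. destruct Hj as [Hj Hlt]. apply Rnot_le_lt in Hlt.
      exists ((s - pdist x (Rs j)) / 4). split. lra.
      intros y Hy [Hy1 _]. specialize (Hy1 j Hj). apply pdist_inbox in Hy.
      pose proof (pdist_tri y x (Rs j)). lra.
    + apply Rnot_le_lt in Hn. exists ((pnorm x - M') / 4). split. lra.
      intros y Hy [_ Hy2]. apply pdist_inbox in Hy. pose proof (pnorm_tri x y).
      rewrite pdist_sym in H. lra.
  - intros x [Hx _] e He. destruct (Hc x Hx e He) as (d & Hd & Hd2). exists d; split; auto.
    intros y [Hy _] Hy'. auto.
  - assert (Hw0 : w x1 <= w x0) by (apply Hmax; split; auto; apply Rmax_r).
    apply (Hloc x0).
    + intros j Hj. destruct (Rle_lt_or_eq_dec _ _ (Hx0 j Hj)) as [H|H]; auto.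
      exfalso. assert (bdA K Rs s x0) by (split; auto; exists j; auto).
      specialize (Hb x0 H0). lra.
    + lra.
    + intros y Hy. destruct (Rle_or_lt (pnorm y) M') as [H|H].
      * apply Hmax. split; auto.
      * assert (M < pnorm y) by (pose proof (Rmax_l M (pnorm x1)); unfold M' in *; lra).
        specialize (HM y Hy H0). lra.
Qed.


Lemma list_cont (l : list nat) (g : nat -> pt -> R) x :
  (forall j, In j l -> forall e, 0 < e -> exists d, 0 < d /\ forall y, inbox x d y -> Rabs (g j y - g j x) < e) ->
  forall e, 0 < e -> exists d, 0 < d /\ forall y, inbox x d y ->
    Rabs (fold_right Rplus 0 (map (fun j => g j y) l) - fold_right Rplus 0 (map (fun j => g j x) l)) < e.
Proof.
  induction l as [|a l IH]; intros H e He; simpl.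
  - exists 1. split; [lra|]. intros. rewrite Rminus_0_r, Rabs_R0. auto.
  - destruct (H a (or_introl eq_refl) (e/2) ltac:(lra)) as (d1 & Hd1 & H1).
    destruct (IH (fun j Hj => H j (or_intror Hj)) (e/2) ltac:(lra)) as (d2 & Hd2 & H2).
    exists (Rmin d1 d2). split. apply Rmin_pos; auto.
    intros y Hy. specialize (H1 y (inbox_weak _ _ _ _ (Rmin_l d1 d2) Hy)).
    specialize (H2 y (inbox_weak _ _ _ _ (Rmin_r d1 d2) Hy)).
    pose proof (Rplus_lt_compat _ _ _ _ H1 H2).
    eapply Rle_lt_trans; [|replace e with (e/2+e/2) by field; exact H0].
    eapply Rle_trans; [|apply Rabs_triang]. right. f_equal. ring.
Qed.

Lemma list_inf (l : list nat) (g : nat -> pt -> R) :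
  (forall j, In j l -> forall e, 0 < e -> exists M, forall y, M < pnorm y -> Rabs (g j y) < e) ->
  forall e, 0 < e -> exists M, forall y, M < pnorm y ->
    Rabs (fold_right Rplus 0 (map (fun j => g j y) l)) < e.
Proof.
  induction l as [|a l IH]; intros H e He; simpl.
  - exists 0. intros. rewrite Rabs_R0. auto.
  - destruct (H a (or_introl eq_refl) (e/2) ltac:(lra)) as (M1 & H1).
    destruct (IH (fun j Hj => H j (or_intror Hj)) (e/2) ltac:(lra)) as (M2 & H2).
    exists (Rmax M1 M2). intros y Hy.
    specialize (H1 y ltac:(pose proof (Rmax_l M1 M2); lra)).
    specialize (H2 y ltac:(pose proof (Rmax_r M1 M2); lra)).
    eapply Rle_lt_trans; [apply Rabs_triang|]. lra.
Qed.

Section Vprops.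
Variables (K : nat) (Rs : nat -> pt) (r : R) (F F1 F2 : nat -> R -> R) (C0 : R).
Hypothesis HF : forall j, (j < K)%nat -> forall rho, r < rho ->
  is_derive (F j) rho (F1 j rho) /\ is_derive (F1 j) rho (F2 j rho).
Hypothesis HFinf : forall j, (j < K)%nat -> forall e, 0 < e -> exists M, forall rho, M < rho -> Rabs (F j rho) < e.

Lemma Vf_cont x : A_set K Rs r x ->
  forall e, 0 < e -> exists d, 0 < d /\ forall y, inbox x d y -> Rabs (Vf K Rs F C0 y - Vf K Rs F C0 x) < e.
Proof.
  intros HA e He. unfold Vf, sum_nuclei.
  destruct (list_cont (seq 0 K) (fun j y => F j (pdist y (Rs j))) x) with (e := e) as (d & Hd & H); auto.
  - intros j Hj e' He'. apply in_seq_lt in Hj.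
    assert (Hc : continuous (F j) (pdist x (Rs j))).
    { apply (@ex_derive_continuous R_AbsRing R_NormedModule (F j)). eexists. apply (HF j Hj). apply HA; auto. }
    destruct (cont_eps_R _ _ Hc e' He') as (d' & Hd' & H').
    exists (d' / 4). split. lra. intros y Hy. apply H'.
    pose proof (pdist_lip x y (Rs j)). apply pdist_inbox in Hy. lra.
  - exists d. split; auto. intros y Hy. specialize (H y Hy).
    replace (fold_right Rplus 0 (map (fun j : nat => F j (pdist y (Rs j))) (seq 0 K)) + C0 -
      (fold_right Rplus 0 (map (fun j : nat => F j (pdist x (Rs j))) (seq 0 K)) + C0)) with
      (fold_right Rplus 0 (map (fun j : nat => F j (pdist y (Rs j))) (seq 0 K)) -
      fold_right Rplus 0 (map (fun j : nat => F j (pdist x (Rs j))) (seq 0 K))) by ring. auto.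
Qed.

Lemma Vf_inf : forall e, 0 < e -> exists M, forall y, M < pnorm y -> Rabs (Vf K Rs F C0 y - C0) < e.
Proof.
  intros e He. unfold Vf, sum_nuclei.
  destruct (list_inf (seq 0 K) (fun j y => F j (pdist y (Rs j)))) with (e := e) as (M & HM); auto.
  - intros j Hj e' He'. apply in_seq_lt in Hj. destruct (HFinf j Hj e' He') as [M HM].
    exists (M + pnorm (Rs j)). intros y Hy. apply HM. pose proof (pnorm_tri y (Rs j)). lra.
  - exists M. intros y Hy. replace (fold_right Rplus 0 (map (fun j : nat => F j (pdist y (Rs j))) (seq 0 K)) + C0 - C0)
      with (fold_right Rplus 0 (map (fun j : nat => F j (pdist y (Rs j))) (seq 0 K))) by ring. auto.
Qed.
End Vprops.


Lemma MP_V (sgn : bool) K Rs r s (phi : pt -> R) (F F1 F2 : nat -> R -> R) (C0 : R) :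
  0 <= r -> r < s ->
  (forall j, (j < K)%nat -> forall rho, r < rho ->
     is_derive (F j) rho (F1 j rho) /\ is_derive (F1 j) rho (F2 j rho)) ->
  (forall j, (j < K)%nat -> forall e, 0 < e -> exists M, forall rho, M < rho -> Rabs (F j rho) < e) ->
  (forall x, A_set K Rs r x -> continuous phi x) ->
  (forall e, 0 < e -> exists M, forall x, A_set K Rs r x -> M < pnorm x -> Rabs (phi x) < e) ->
  C2_on (A_set K Rs r) phi ->
  (if sgn then C0 <= 0 else 0 <= C0) ->
  (forall x, bdA K Rs s x -> if sgn then Vf K Rs F C0 x <= phi x else phi x <= Vf K Rs F C0 x) ->
  (forall x0, A_set K Rs s x0 ->
     (if sgn then phi x0 < Vf K Rs F C0 x0 /\ LapV K Rs F1 F2 x0 <= laplacian phi x0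
      else Vf K Rs F C0 x0 < phi x0 /\ laplacian phi x0 <= LapV K Rs F1 F2 x0) -> False) ->
  forall x, A_set K Rs s x -> if sgn then Vf K Rs F C0 x <= phi x else phi x <= Vf K Rs F C0 x.
Proof.
  intros Hr Hrs HF HFinf Hcont Hvan HC2 HC0 Hbd Hlap.
  set (w := fun x => if sgn then Vf K Rs F C0 x - phi x else phi x - Vf K Rs F C0 x).
  assert (HclA : forall x, clA K Rs s x -> A_set K Rs r x).
  { intros x Hx j Hj. specialize (Hx j Hj). lra. }
  intros x Hx.
  assert (Hw : w x <= 0).
  2:{ unfold w in Hw. destruct sgn; lra. }
  apply (MP K Rs s w); auto.
  - intros y Hy e He. pose proof (HclA y Hy) as HAy.
    destruct (cont_eps phi y (Hcont y HAy) (e/2) ltac:(lra)) as (d1 & Hd1 & H1).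
    destruct (Vf_cont K Rs r F F1 F2 C0 HF y HAy (e/2) ltac:(lra)) as (d2 & Hd2 & H2).
    exists (Rmin d1 d2). split. apply Rmin_pos; auto.
    intros z Hz Hz'. specialize (H1 z (inbox_weak _ _ _ _ (Rmin_l d1 d2) Hz')).
    specialize (H2 z (inbox_weak _ _ _ _ (Rmin_r d1 d2) Hz')).
    apply Rabs_def2 in H1. apply Rabs_def2 in H2. unfold w. destruct sgn; lra.
  - intros y Hy. specialize (Hbd y Hy). unfold w. destruct sgn; lra.
  - intros e He.
    destruct (Vf_inf K Rs F C0 HFinf (e/2) ltac:(lra)) as (M1 & H1).
    destruct (Hvan (e/2) ltac:(lra)) as (M2 & H2).
    exists (Rmax M1 M2). intros y Hy Hy'.
    specialize (H1 y ltac:(pose proof (Rmax_l M1 M2); lra)).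
    specialize (H2 y (HclA y Hy) ltac:(pose proof (Rmax_r M1 M2); lra)).
    apply Rabs_def2 in H1. apply Rabs_def2 in H2. unfold w. destruct sgn; lra.
  - intros x0 Hx0 Hw0 Hmax. apply (Hlap x0 Hx0).
    destruct (exists_min K (fun j => pdist x0 (Rs j) - s)) as (dl & Hdl & Hdl2).
    { intros j Hj. specialize (Hx0 j Hj). lra. }
    assert (Hloc : exists dl, 0 < dl /\ forall i t, (i < 3)%nat -> Rabs t < dl ->
       if sgn then Vf K Rs F C0 (shift i t x0) - phi (shift i t x0) <= Vf K Rs F C0 x0 - phi x0
       else phi (shift i t x0) - Vf K Rs F C0 (shift i t x0) <= phi x0 - Vf K Rs F C0 x0).
    { exists dl. split; auto. intros i t Hi Ht.
      assert (clA K Rs s (shift i t x0)).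
      { intros j Hj. pose proof (pdist_shift i t x0 (Rs j)). apply Rabs_le_between in H.
        specialize (Hdl2 j Hj). lra. }
      specialize (Hmax _ H). unfold w in Hmax. destruct sgn; lra. }
    pose proof (cmp_gen K Rs r Hr F F1 F2 C0 phi x0 sgn HF HC2 (HclA x0 ltac:(intros j Hj; specialize (Hx0 j Hj); lra)) Hloc).
    unfold w in Hw0. destruct sgn; split; auto; lra.
Qed.


Definition Cst : R := 4 * PI * Rpower c_TF (- (3 / 2)).

Lemma cTF_pow : Rpower c_TF (- (3 / 2)) = 2 * sqrt 2 / (3 * PI ^ 2).
Proof.
  pose proof PI_RGT_0.
  assert (HX : 0 < 3 * PI ^ 2) by (apply Rmult_lt_0_compat; [lra| apply pow_lt; lra]).
  unfold c_TF. rewrite <- Rpower_mult_distr.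
  2: lra. 2: unfold Rpower; apply exp_pos.
  rewrite Rpower_mult. replace (2 / 3 * - (3 / 2)) with (-(1)) by field.
  rewrite (Rpower_Ropp (3 * PI ^ 2) 1), (Rpower_1 (3 * PI ^ 2)) by auto.
  replace (Rpower (/ 2) (- (3 / 2))) with (Rpower 2 (1 + /2)).
  2:{ unfold Rpower. f_equal. rewrite ln_Rinv by lra. field. }
  rewrite Rpower_plus, Rpower_1, Rpower_sqrt by lra. field. lra.
Qed.

Lemma sqrt_cS : sqrt c_S = 9 * PI * sqrt 2 / 4.
Proof.
  pose proof PI_RGT_0. pose proof (sqrt_lt_R0 2 ltac:(lra)).
  replace c_S with ((9 * PI * sqrt 2 / 4) ^ 2).
  apply sqrt_pow2. apply Rmult_le_pos; [|lra]. apply Rmult_le_pos; lra.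
  unfold c_S. replace ((9 * PI * sqrt 2 / 4) ^ 2) with (81 * PI^2 * (sqrt 2 * sqrt 2) / 16) by field.
  rewrite sqrt_sqrt by lra. field.
Qed.

Lemma Cst_sqrt : Cst * sqrt c_S = 12.
Proof.
  unfold Cst. rewrite cTF_pow, sqrt_cS. pose proof PI_RGT_0.
  replace (4 * PI * (2 * sqrt 2 / (3 * PI ^ 2)) * (9 * PI * sqrt 2 / 4)) with (6 * (sqrt 2 * sqrt 2)) by (field; lra).
  rewrite sqrt_sqrt by lra. ring.
Qed.

Lemma cS_pos : 0 < c_S.
Proof. unfold c_S. pose proof PI_RGT_0. apply Rmult_lt_0_compat. lra. apply pow_lt; lra. Qed.

Lemma Cst_pos : 0 < Cst.
Proof. unfold Cst. pose proof PI_RGT_0. apply Rmult_lt_0_compat. lra. unfold Rpower; apply exp_pos. Qed.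

Lemma xi_eq : xi ^ 2 + 7 * xi - 6 = 0.
Proof. unfold xi. replace (((-7 + sqrt 73) / 2) ^ 2 + 7 * ((-7 + sqrt 73) / 2) - 6) with ((sqrt 73 * sqrt 73 - 73)/4) by field.
  rewrite sqrt_sqrt by lra. field. Qed.

Lemma xi_bounds : 0 < xi /\ xi <= 6 / 7.
Proof.
  unfold xi. split.
  - assert (7 < sqrt 73). { rewrite <- (sqrt_pow2 7) by lra. apply sqrt_lt_1_alt. lra. } lra.
  - assert (sqrt 73 <= 61 / 7). { rewrite <- (sqrt_pow2 (61/7)) by lra. apply sqrt_le_1_alt. lra. } lra.
Qed.


Definition Ex (r rho : R) := exp (xi * (ln r + - ln rho)).
Definition U (b r rho : R) := 1 + b * Ex r rho.
Definition Fm b r rho := c_S / rho ^ 4 / (U b r rho) ^ 2.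
Definition F1m b r rho := c_S * ((2 * xi - 4) * U b r rho - 2 * xi) / (rho ^ 5 * U b r rho ^ 3).
Definition F2m b r rho := c_S * ((-5 * U b r rho + 3 * xi * (U b r rho - 1)) * ((2 * xi - 4) * U b r rho - 2 * xi)
   - (2 * xi - 4) * xi * (U b r rho - 1) * U b r rho) / (rho ^ 6 * U b r rho ^ 4).
Definition Fp b r rho := c_S / rho ^ 4 * U b r rho.
Definition F1p b r rho := c_S * ((-4 - xi) * U b r rho + xi) / rho ^ 5.
Definition F2p b r rho := c_S * (-5 * ((-4 - xi) * U b r rho + xi) + (4 + xi) * xi * (U b r rho - 1)) / rho ^ 6.

Ltac nz := repeat match goal with |- _ * _ <> 0 => apply Rmult_integral_contrapositive_currified end; try lra; auto.

Lemma Fm_deriv b r rho : 0 < r -> 0 < rho -> U b r rho <> 0 ->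
  is_derive (Fm b r) rho (F1m b r rho) /\ is_derive (F1m b r) rho (F2m b r rho).
Proof.
  intros Hr Hrho HU. unfold Fm, F1m, F2m, U, Ex in *. split.
  - auto_derive. repeat split; auto; nz. field. repeat split; auto; nz.
  - auto_derive. repeat split; auto; nz. field. repeat split; auto; nz.
Qed.

Lemma Fp_deriv b r rho : 0 < r -> 0 < rho ->
  is_derive (Fp b r) rho (F1p b r rho) /\ is_derive (F1p b r) rho (F2p b r rho).
Proof.
  intros Hr Hrho. unfold Fp, F1p, F2p, U, Ex in *. split.
  - auto_derive. repeat split; auto; nz. field. repeat split; auto; nz.
  - auto_derive. repeat split; auto; nz. field. repeat split; auto; nz.
Qed.

Lemma Fm_lap b r rho : 0 < rho -> U b r rho <> 0 ->
  F2m b r rho + 2 * F1m b r rho / rho =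
  c_S * (12 * U b r rho ^ 2 - 14 * xi * (U b r rho - 1) * U b r rho
         - 2 * xi ^ 2 * (U b r rho - 1) * (3 - 2 * U b r rho)) / (rho ^ 6 * U b r rho ^ 4).
Proof. intros. unfold F2m, F1m. field. split; auto; lra. Qed.

Lemma Fp_lap b r rho : 0 < rho ->
  F2p b r rho + 2 * F1p b r rho / rho = c_S * (18 * U b r rho - 6) / rho ^ 6.
Proof.
  intros. unfold F2p, F1p. pose proof xi_eq.
  replace (18 * U b r rho - 6) with ((12 + 7 * xi + xi ^ 2) * U b r rho - 7 * xi - xi ^ 2
     - (xi ^ 2 + 7 * xi - 6) * (U b r rho - 1)) by ring.
  rewrite H0. field. lra.
Qed.

Lemma sqrt_Fm b r rho : 0 < rho -> 0 < U b r rho -> sqrt (Fm b r rho) = sqrt c_S / (rho ^ 2 * U b r rho).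
Proof.
  intros. unfold Fm. pose proof cS_pos.
  replace (c_S / rho ^ 4 / U b r rho ^ 2) with (c_S * (/ (rho ^ 2 * U b r rho)) ^ 2) by (field; lra).
  rewrite sqrt_mult_alt by lra. rewrite sqrt_pow2. field; lra.
  apply Rlt_le, Rinv_0_lt_compat, Rmult_lt_0_compat; auto. apply pow_lt; auto.
Qed.

Lemma Fm_sub b r rho : 0 < rho -> 0 < U b r rho ->
  Cst * (Fm b r rho * sqrt (Fm b r rho)) <= F2m b r rho + 2 * F1m b r rho / rho.
Proof.
  intros Hr HU. rewrite Fm_lap by lra. rewrite sqrt_Fm by auto.
  pose proof cS_pos. pose proof Cst_sqrt. pose proof xi_eq. pose proof xi_bounds.
  unfold Fm. set (u := U b r rho) in *.
  replace (Cst * (c_S / rho ^ 4 / u ^ 2 * (sqrt c_S / (rho ^ 2 * u)))) with (c_S * (12 * u) / (rho ^ 6 * u ^ 4))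
    by (rewrite <- H0; field; lra).
  unfold Rdiv. apply Rmult_le_compat_r.
  apply Rlt_le, Rinv_0_lt_compat, Rmult_lt_0_compat; apply pow_lt; auto.
  apply Rmult_le_compat_l; [lra|].
  replace (12 * u ^ 2 - 14 * xi * (u - 1) * u - 2 * xi ^ 2 * (u - 1) * (3 - 2 * u))
    with (12 * u + (u - 1) ^ 2 * (36 - 42 * xi) + (xi ^ 2 + 7 * xi - 6) * (u - 1) * (4 * u - 6)) by ring.
  rewrite H1. assert (0 <= (u - 1) ^ 2 * (36 - 42 * xi)) by (apply Rmult_le_pos; [apply pow2_ge_0|lra]). lra.
Qed.

Lemma sqrt_Fp b r rho : 0 < rho -> 0 < U b r rho -> sqrt (Fp b r rho) = sqrt c_S * sqrt (U b r rho) / rho ^ 2.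
Proof.
  intros. unfold Fp. pose proof cS_pos.
  replace (c_S / rho ^ 4 * U b r rho) with (c_S * U b r rho * (/ rho ^ 2) ^ 2) by (field; lra).
  rewrite sqrt_mult_alt, sqrt_mult_alt, sqrt_pow2. field; lra.
  apply Rlt_le, Rinv_0_lt_compat, pow_lt; auto. lra.
  apply Rmult_le_pos; lra.
Qed.

Lemma Fp_super b r rho : 0 < rho -> 0 < U b r rho ->
  F2p b r rho + 2 * F1p b r rho / rho <= Cst * (Fp b r rho * sqrt (Fp b r rho)).
Proof.
  intros Hr HU. rewrite Fp_lap by lra. rewrite sqrt_Fp by auto.
  pose proof cS_pos. pose proof Cst_sqrt. unfold Fp. set (u := U b r rho) in *.
  replace (Cst * (c_S / rho ^ 4 * u * (sqrt c_S * sqrt u / rho ^ 2))) with (c_S * (12 * u * sqrt u) / rho ^ 6)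
    by (rewrite <- H0; field; lra).
  unfold Rdiv. apply Rmult_le_compat_r. apply Rlt_le, Rinv_0_lt_compat, pow_lt; auto.
  apply Rmult_le_compat_l; [lra|].
  pose proof (sqrt_sqrt u ltac:(lra)). pose proof (sqrt_pos u). set (v := sqrt u) in *.
  rewrite <- H1. assert (0 <= (v - 1) ^ 2 * (2 * v + 1)) by (apply Rmult_le_pos; [apply pow2_ge_0|lra]).
  nra.
Qed.

Lemma Ex_bounds r rho : 0 < r -> r <= rho -> 0 < Ex r rho <= 1 /\ (r / rho) ^ 2 <= Ex r rho.
Proof.
  intros Hr Hrho. pose proof xi_bounds. unfold Ex.
  assert (Hl : ln r + - ln rho <= 0) by (assert (ln r <= ln rho) by (destruct (Req_dec r rho); [subst; lra| left; apply ln_increasing; lra]); lra).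
  split; [split|].
  - apply exp_pos.
  - rewrite <- exp_0. destruct (Req_dec (xi * (ln r + - ln rho)) 0) as [E|E]; [rewrite E; lra|].
    left. apply exp_increasing. nra.
  - replace ((r / rho) ^ 2) with (exp (2 * (ln r + - ln rho))).
    + destruct (Req_dec (ln r + - ln rho) 0) as [E|E]; [rewrite E, !Rmult_0_r; lra|].
      left. apply exp_increasing. nra.
    + replace (ln r + - ln rho) with (ln (r/rho)) by (rewrite ln_div by lra; ring). replace (2 * ln (r / rho)) with (ln (r/rho) + ln (r/rho)) by ring.
      rewrite exp_plus, exp_ln. ring. apply Rdiv_lt_0_compat; lra.
Qed.

Lemma Rpower_Ex r rho : 0 < r -> 0 < rho -> Rpower (r / rho) xi = Ex r rho.
Proof. intros. unfold Rpower, Ex. rewrite ln_div by auto. f_equal. Qed.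

Lemma U_pos b r rho : -1 < b -> 0 < r -> r <= rho -> Rmin 1 (1 + b) <= U b r rho.
Proof.
  intros Hb Hr Hrho. destruct (Ex_bounds r rho Hr Hrho) as [[E1 E2] _]. unfold U.
  destruct (Rle_or_lt 0 b).
  - pose proof (Rmin_l 1 (1 + b)). nra.
  - pose proof (Rmin_r 1 (1 + b)). nra.
Qed.

Lemma Rmin_pos1 b : -1 < b -> 0 < Rmin 1 (1 + b).
Proof. intros. apply Rmin_pos; lra. Qed.

Lemma Fm_le_r b r rho : -1 < b -> 0 < r -> r <= rho -> Fm b r rho <= c_S / r ^ 4 / (1 + b) ^ 2.
Proof.
  intros Hb Hr Hrho. destruct (Ex_bounds r rho Hr Hrho) as [[E1 E2] E3].
  assert (H2 : r ^ 2 * (1 + b) <= rho ^ 2 * U b r rho).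
  { unfold U. destruct (Rle_or_lt 0 b).
    - assert (r ^ 2 <= rho ^ 2 * Ex r rho).
      { replace (r ^ 2) with (rho ^ 2 * (r / rho) ^ 2) by (field; lra). apply Rmult_le_compat_l; auto. apply pow2_ge_0. }
      assert (r ^ 2 <= rho ^ 2) by (apply pow_incr; lra). nra.
    - assert (r ^ 2 <= rho ^ 2) by (apply pow_incr; lra).
      assert (1 + b <= 1 + b * Ex r rho) by nra.
      assert (r ^ 2 * (1 + b) <= rho ^ 2 * (1 + b)) by (apply Rmult_le_compat_r; lra).
      assert (rho ^ 2 * (1 + b) <= rho ^ 2 * (1 + b * Ex r rho)) by (apply Rmult_le_compat_l; [apply pow2_ge_0|lra]).
      lra. }
  pose proof cS_pos. unfold Fm.
  assert (0 < U b r rho) by (pose proof (U_pos b r rho Hb Hr Hrho); pose proof (Rmin_pos1 b Hb); lra).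
  replace (c_S / rho ^ 4 / U b r rho ^ 2) with (c_S / (rho ^ 2 * U b r rho) ^ 2) by (field; repeat split; lra).
  replace (c_S / r ^ 4 / (1 + b) ^ 2) with (c_S / (r ^ 2 * (1 + b)) ^ 2) by (field; lra).
  unfold Rdiv. apply Rmult_le_compat_l; [lra|]. apply Rinv_le_contravar.
  apply pow_lt. apply Rmult_lt_0_compat. apply pow_lt; lra. lra.
  apply pow_incr. split; auto. apply Rmult_le_pos. apply pow2_ge_0. lra.
Qed.


Lemma glb_le (E : Rbar -> Prop) v : E (Finite v) -> Rbar_le (Rbar_glb E) (Finite v).
Proof. intros H. unfold Rbar_glb. destruct (Rbar_ex_glb E) as [l Hl0]. cbn [proj1_sig]. destruct Hl0 as [Hl _]. apply Hl; auto. Qed.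

Lemma lub_ge (E : Rbar -> Prop) v : E (Finite v) -> Rbar_le (Finite v) (Rbar_lub E).
Proof. intros H. unfold Rbar_lub. destruct (Rbar_ex_lub E) as [l Hl0]. cbn [proj1_sig]. destruct Hl0 as [Hl _]. apply Hl; auto. Qed.

Lemma glb_ge (E : Rbar -> Prop) b : (forall y, E y -> Rbar_le b y) -> Rbar_le b (Rbar_glb E).
Proof. intros H. unfold Rbar_glb. destruct (Rbar_ex_glb E) as [l Hl0]. cbn [proj1_sig]. destruct Hl0 as [_ Hl]. apply Hl. intros y Hy; auto. Qed.

Lemma lub_le (E : Rbar -> Prop) b : (forall y, E y -> Rbar_le y b) -> Rbar_le (Rbar_lub E) b.
Proof. intros H. unfold Rbar_lub. destruct (Rbar_ex_lub E) as [l Hl0]. cbn [proj1_sig]. destruct Hl0 as [_ Hl]. apply Hl. intros y Hy; auto. Qed.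

Lemma glb_le_gen (E : Rbar -> Prop) y : E y -> Rbar_le (Rbar_glb E) y.
Proof. intros H. unfold Rbar_glb. destruct (Rbar_ex_glb E) as [l Hl0]. cbn [proj1_sig]. destruct Hl0 as [Hl _]. apply Hl; auto. Qed.

Lemma lub_ge_gen (E : Rbar -> Prop) y : E y -> Rbar_le y (Rbar_lub E).
Proof. intros H. unfold Rbar_lub. destruct (Rbar_ex_lub E) as [l Hl0]. cbn [proj1_sig]. destruct Hl0 as [Hl _]. apply Hl; auto. Qed.

Lemma liminf_small (g : R -> Rbar) r a b : liminf_right g r = Finite a -> a < b ->
  forall d, 0 < d -> exists s, r < s < r + d /\ Rbar_lt (g s) (Finite b).
Proof.
  intros Ha Hab d Hd. apply NNPP. intros C.
  assert (Rbar_le (Finite b) (Rbar_glb (fun z => exists s, r < s < r + d /\ z = g s))).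
  { apply glb_ge. intros y (s & Hs & ->). apply Rbar_not_lt_le. intro. apply C. exists s; auto. }
  assert (Rbar_le (Rbar_glb (fun z => exists s, r < s < r + d /\ z = g s)) (liminf_right g r)).
  { unfold liminf_right. apply lub_ge_gen. exists d; auto. }
  rewrite Ha in H0. pose proof (Rbar_le_trans _ _ _ H H0). simpl in H1. lra.
Qed.

Lemma sup_bd_lt K Rs f s b : Rbar_lt (sup_bd K Rs f s) (Finite b) -> forall w, bdA K Rs s w -> f w < b.
Proof.
  intros H w Hw. assert (Rbar_le (Finite (f w)) (sup_bd K Rs f s)) by (apply lub_ge; exists w; auto).
  pose proof (Rbar_le_lt_trans _ _ _ H0 H). simpl in H1. auto.
Qed.

Lemma inf_bd_gt K Rs f s b : Rbar_lt (Finite b) (inf_bd K Rs f s) -> forall w, bdA K Rs s w -> b < f w.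
Proof.
  intros H w Hw. assert (Rbar_le (inf_bd K Rs f s) (Finite (f w))) by (apply glb_le; exists w; auto).
  pose proof (Rbar_lt_le_trans _ _ _ H H0). simpl in H1. auto.
Qed.

Lemma sum_nuclei_S K g : sum_nuclei (S K) g = sum_nuclei K g + g K.
Proof.
  unfold sum_nuclei. rewrite seq_S, map_app, fold_right_app. simpl.
  assert (forall l c, fold_right Rplus c l = fold_right Rplus 0 l + c).
  { induction l; intros c; simpl. ring. rewrite IHl. ring. }
  rewrite H. ring.
Qed.

Lemma sum_zero K g : (forall j, (j < K)%nat -> g j = 0) -> sum_nuclei K g = 0.
Proof.
  induction K; intros H. reflexivity. rewrite sum_nuclei_S, IHK. rewrite H by lia. ring. intros; apply H; lia.
Qed.

Lemma sum_single K j0 g : (j0 < K)%nat -> (forall j, (j < K)%nat -> j <> j0 -> g j = 0) -> sum_nuclei K g = g j0.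
Proof.
  induction K; intros Hj H. lia. rewrite sum_nuclei_S. destruct (Nat.eq_dec j0 K) as [->|Hn].
  - rewrite sum_zero. ring. intros; apply H; lia.
  - rewrite IHK, (H K); try lia. ring. intros; apply H; lia.
Qed.

Lemma sum_ge_term K g j : (j < K)%nat -> (forall k, (k < K)%nat -> 0 <= g k) -> g j <= sum_nuclei K g.
Proof.
  induction K; intros Hj H. lia. rewrite sum_nuclei_S. destruct (Nat.eq_dec j K) as [->|Hn].
  - assert (0 <= sum_nuclei K g). { clear Hj IHK. induction K. unfold sum_nuclei; simpl; lra.
      rewrite sum_nuclei_S. assert (0 <= g K) by (apply H; lia). assert (0 <= sum_nuclei K g) by (apply IHK; intros; apply H; lia). lra. }
    lra.
  - assert (0 <= g K) by (apply H; lia). assert (g j <= sum_nuclei K g) by (apply IHK; [lia| intros; apply H; lia]). lra.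
Qed.

Lemma sum_nonneg K g : (forall k, (k < K)%nat -> 0 <= g k) -> 0 <= sum_nuclei K g.
Proof.
  induction K; intros H. unfold sum_nuclei; simpl; lra. rewrite sum_nuclei_S.
  assert (0 <= g K) by (apply H; lia). assert (0 <= sum_nuclei K g) by (apply IHK; intros; apply H; lia). lra.
Qed.

Lemma sum_le_K K a b : (forall k, (k < K)%nat -> a k <= b k) -> sum_nuclei K a <= sum_nuclei K b.
Proof.
  induction K; intros H. unfold sum_nuclei; simpl; lra. rewrite !sum_nuclei_S.
  assert (a K <= b K) by (apply H; lia). assert (sum_nuclei K a <= sum_nuclei K b) by (apply IHK; intros; apply H; lia). lra.
Qed.

Lemma pow32_lt s t : 0 <= s -> s < t -> s * sqrt s < t * sqrt t.
Proof.
  intros. assert (sqrt s <= sqrt t) by (apply sqrt_le_1_alt; lra).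
  pose proof (sqrt_pos s). assert (0 < sqrt t) by (apply sqrt_lt_R0; lra). nra.
Qed.

Lemma pos32_nonpos t : t <= 0 -> pos32 t = 0.
Proof. intros. unfold pos32, pos_part. rewrite Rmax_right by lra. ring. Qed.

Lemma pos32_pos t : 0 <= t -> pos32 t = t * sqrt t.
Proof. intros. unfold pos32, pos_part. rewrite Rmax_left by lra. ring. Qed.

Lemma pow32_superadd K g : (forall k, (k < K)%nat -> 0 <= g k) ->
  sum_nuclei K (fun k => g k * sqrt (g k)) <= sum_nuclei K g * sqrt (sum_nuclei K g).
Proof.
  induction K; intros H. unfold sum_nuclei; simpl. rewrite sqrt_0. lra.
  rewrite !sum_nuclei_S.
  assert (HK : 0 <= g K) by (apply H; lia).
  assert (HS : 0 <= sum_nuclei K g) by (apply sum_nonneg; intros; apply H; lia).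
  assert (IH : sum_nuclei K (fun k => g k * sqrt (g k)) <= sum_nuclei K g * sqrt (sum_nuclei K g))
    by (apply IHK; intros; apply H; lia).
  assert (sqrt (sum_nuclei K g) <= sqrt (sum_nuclei K g + g K)) by (apply sqrt_le_1_alt; lra).
  assert (sqrt (g K) <= sqrt (sum_nuclei K g + g K)) by (apply sqrt_le_1_alt; lra).
  pose proof (sqrt_pos (sum_nuclei K g)). pose proof (sqrt_pos (g K)). nra.
Qed.


Lemma decay (F : R -> R) (C R0 : R) : 0 <= C ->
  (forall rho, R0 < rho -> 1 <= rho -> Rabs (F rho) <= C / rho) ->
  forall e, 0 < e -> exists M, forall rho, M < rho -> Rabs (F rho) < e.
Proof.
  intros HC HF e He. exists (Rmax (Rmax 1 R0) (C / e)). intros rho Hrho.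
  pose proof (Rmax_l (Rmax 1 R0) (C / e)). pose proof (Rmax_r (Rmax 1 R0) (C / e)).
  pose proof (Rmax_l 1 R0). pose proof (Rmax_r 1 R0).
  eapply Rle_lt_trans. apply HF; lra.
  apply Rmult_lt_reg_r with rho. lra. unfold Rdiv. rewrite Rmult_assoc, Rinv_l, Rmult_1_r by lra.
  assert (C / e < rho) by lra. apply Rmult_lt_compat_l with (r := e) in H3; auto.
  replace (e * (C / e)) with C in H3 by (field; lra). lra.
Qed.

Lemma pow4_ge rho : 1 <= rho -> rho <= rho ^ 4.
Proof. intros. assert (1 <= rho ^ 3) by (apply pow_R1_Rle; lra). simpl in *. nra. Qed.

Lemma Fm_inf b r : -1 < b -> 0 < r -> forall e, 0 < e -> exists M, forall rho, M < rho -> Rabs (Fm b r rho) < e.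
Proof.
  intros Hb Hr. pose proof (Rmin_pos1 b Hb). set (m := Rmin 1 (1 + b)) in *. pose proof cS_pos.
  apply (decay _ (c_S / m ^ 2) r). apply Rlt_le, Rdiv_lt_0_compat; auto. apply pow_lt; auto.
  intros rho H1 H2. pose proof (U_pos b r rho Hb Hr ltac:(lra)). fold m in H3.
  unfold Fm. rewrite Rabs_pos_eq.
  2:{ apply Rlt_le. apply Rdiv_lt_0_compat. apply Rdiv_lt_0_compat; auto. apply pow_lt; lra. apply pow_lt; lra. }
  replace (c_S / rho ^ 4 / U b r rho ^ 2) with (c_S * / (rho ^ 4 * U b r rho ^ 2)) by (field; lra).
  replace (c_S / m ^ 2 / rho) with (c_S * / (rho * m ^ 2)) by (field; lra).
  apply Rmult_le_compat_l; [lra|]. apply Rinv_le_contravar. apply Rmult_lt_0_compat; [lra|apply pow_lt; lra].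
  pose proof (pow4_ge rho H2). assert (m ^ 2 <= U b r rho ^ 2) by (apply pow_incr; lra).
  apply Rmult_le_compat; try lra. apply pow2_ge_0.
Qed.

Lemma Fp_inf b r : -1 < b -> 0 < r -> forall e, 0 < e -> exists M, forall rho, M < rho -> Rabs (Fp b r rho) < e.
Proof.
  intros Hb Hr. pose proof (Rmin_pos1 b Hb). pose proof cS_pos.
  apply (decay _ (c_S * (1 + Rabs b)) r). pose proof (Rabs_pos b). apply Rmult_le_pos; lra.
  intros rho H1 H2. pose proof (U_pos b r rho Hb Hr ltac:(lra)).
  destruct (Ex_bounds r rho Hr ltac:(lra)) as [[E1 E2] _].
  assert (U b r rho <= 1 + Rabs b).
  { unfold U. assert (b * Ex r rho <= Rabs b). { eapply Rle_trans. apply Rle_abs.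
      rewrite Rabs_mult, (Rabs_pos_eq (Ex r rho)) by lra. pose proof (Rabs_pos b). nra. } lra. }
  unfold Fp. rewrite Rabs_pos_eq.
  2:{ apply Rmult_le_pos; [|lra]. apply Rlt_le, Rdiv_lt_0_compat; auto. apply pow_lt; lra. }
  replace (c_S / rho ^ 4 * U b r rho) with (c_S * U b r rho * / rho ^ 4) by (field; lra).
  replace (c_S * (1 + Rabs b) / rho) with (c_S * (1 + Rabs b) * / rho) by (field; lra).
  apply Rmult_le_compat. apply Rmult_le_pos; lra. apply Rlt_le, Rinv_0_lt_compat, pow_lt; lra.
  apply Rmult_le_compat_l; lra.
  apply Rinv_le_contravar. lra. apply pow4_ge; auto.
Qed.

Definition Fn (c1 c2 rho : R) := c1 / rho + c2 / rho ^ 2.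
Definition F1n (c1 c2 rho : R) := - c1 / rho ^ 2 - 2 * c2 / rho ^ 3.
Definition F2n (c1 c2 rho : R) := 2 * c1 / rho ^ 3 + 6 * c2 / rho ^ 4.

Lemma Fn_deriv c1 c2 rho : 0 < rho -> is_derive (Fn c1 c2) rho (F1n c1 c2 rho) /\ is_derive (F1n c1 c2) rho (F2n c1 c2 rho).
Proof.
  intros H. unfold Fn, F1n, F2n. split.
  - auto_derive. repeat split; auto; nz. field. lra.
  - auto_derive. repeat split; auto; nz. field. lra.
Qed.

Lemma Fn_lap c1 c2 rho : 0 < rho -> F2n c1 c2 rho + 2 * F1n c1 c2 rho / rho = 2 * c2 / rho ^ 4.
Proof. intros. unfold F2n, F1n. field. lra. Qed.

Lemma Fn_inf c1 c2 : forall e, 0 < e -> exists M, forall rho, M < rho -> Rabs (Fn c1 c2 rho) < e.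
Proof.
  apply (decay _ (Rabs c1 + Rabs c2) 0). pose proof (Rabs_pos c1); pose proof (Rabs_pos c2); lra.
  intros rho H1 H2. unfold Fn. eapply Rle_trans. apply Rabs_triang.
  unfold Rdiv. rewrite !Rabs_mult. rewrite (Rabs_pos_eq (/ rho)), (Rabs_pos_eq (/ rho ^ 2)).
  2: apply Rlt_le, Rinv_0_lt_compat, pow_lt; lra. 2: apply Rlt_le, Rinv_0_lt_compat; lra.
  assert (/ rho ^ 2 <= / rho) by (apply Rinv_le_contravar; [lra|]; simpl; nra).
  pose proof (Rabs_pos c1); pose proof (Rabs_pos c2). nra.
Qed.

Lemma Fm_cont_b a r rho : 0 < rho -> U a r rho <> 0 ->
  forall e, 0 < e -> exists d, 0 < d /\ forall b, Rabs (b - a) < d -> Rabs (Fm b r rho - Fm a r rho) < e.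
Proof.
  intros Hrho HU. apply (cont_eps_R (fun b => Fm b r rho) a).
  apply (@ex_derive_continuous R_AbsRing R_NormedModule). unfold Fm, U in *. auto_derive.
  repeat split; auto; nz.
Qed.

Lemma Fp_lin a b r rho : Fp b r rho = Fp a r rho + (b - a) * (c_S / rho ^ 4 * Ex r rho).
Proof. unfold Fp, U. ring. Qed.


Definition Fam (j0 : nat) (G : R -> R) : nat -> R -> R :=
  fun j => if Nat.eq_dec j j0 then G else (fun _ => 0).

Lemma Vf_Fam K Rs j0 G C0 x : (j0 < K)%nat -> Vf K Rs (Fam j0 G) C0 x = G (pdist x (Rs j0)) + C0.
Proof.
  intros Hj. unfold Vf. rewrite (sum_single K j0). unfold Fam. destruct (Nat.eq_dec j0 j0); [auto|congruence].
  auto. intros j _ Hn. unfold Fam. destruct (Nat.eq_dec j j0); [congruence|auto].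
Qed.

Lemma LapV_Fam K Rs j0 G1 G2 x : (j0 < K)%nat ->
  LapV K Rs (Fam j0 G1) (Fam j0 G2) x = G2 (pdist x (Rs j0)) + 2 * G1 (pdist x (Rs j0)) / pdist x (Rs j0).
Proof.
  intros Hj. unfold LapV. rewrite (sum_single K j0). unfold Fam. destruct (Nat.eq_dec j0 j0); [auto|congruence].
  auto. intros j _ Hn. unfold Fam. destruct (Nat.eq_dec j j0); [congruence|]. unfold Rdiv; ring.
Qed.

Lemma HF_Fam K j0 r (G G1 G2 : R -> R) :
  (forall rho, r < rho -> is_derive G rho (G1 rho) /\ is_derive G1 rho (G2 rho)) ->
  forall j, (j < K)%nat -> forall rho, r < rho ->
    is_derive (Fam j0 G j) rho (Fam j0 G1 j rho) /\ is_derive (Fam j0 G1 j) rho (Fam j0 G2 j rho).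
Proof.
  intros H j Hj rho Hrho. unfold Fam. destruct (Nat.eq_dec j j0). auto.
  split; apply is_derive_Rconst.
Qed.

Lemma HFinf_Fam K j0 (G : R -> R) :
  (forall e, 0 < e -> exists M, forall rho, M < rho -> Rabs (G rho) < e) ->
  forall j, (j < K)%nat -> forall e, 0 < e -> exists M, forall rho, M < rho -> Rabs (Fam j0 G j rho) < e.
Proof.
  intros H j Hj e He. unfold Fam. destruct (Nat.eq_dec j j0). auto.
  exists 0. intros. rewrite Rabs_R0. auto.
Qed.

Section Main.
Variables (K : nat) (Rs : nat -> pt) (r mu : R) (phi : pt -> R).
Hypothesis HK : (1 <= K)%nat.
Hypothesis Hr : 0 < r.
Hypothesis HR0 : le_R0 K Rs r.
Hypothesis Hmu : 0 <= mu.
Hypothesis Hcont : forall x, A_set K Rs r x -> continuous phi x.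
Hypothesis Hvan : forall eps, 0 < eps -> exists M, forall x, A_set K Rs r x -> M < pnorm x -> Rabs (phi x) < eps.
Hypothesis HC2 : C2_on (A_set K Rs r) phi.
Hypothesis Heq : forall x, A_set K Rs r x ->
      laplacian phi x = 4 * PI * Rpower c_TF (- (3 / 2)) * pos32 (phi x - mu).
Hypothesis Hlim : exists L : Rbar, Rbar_lt (Finite mu) L /\ lim_right_Rbar (fun s => inf_bd K Rs phi s) r L.

Lemma ev_mu : exists d, 0 < d /\ forall s, r < s < r + d -> forall w, bdA K Rs s w -> mu < phi w.
Proof.
  destruct Hlim as (L & HL & Hl1 & _). destruct (Hl1 mu HL) as (d & Hd & Hs).
  exists d. split; auto. intros s Hs' w Hw. apply (inf_bd_gt K Rs phi s); auto.
Qed.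

Lemma bd_ne : forall s, r < s <= 2 * r -> exists w, bdA K Rs s w.
Proof.
  intros s Hs. exists (shift 0 s (Rs 0%nat)). split.
  - intros j Hj. destruct (Nat.eq_dec j 0) as [->|Hn].
    + rewrite pdist_shift_self, Rabs_pos_eq; lra.
    + destruct HR0 as [_ H4]. specialize (H4 0%nat j ltac:(lia) Hj ltac:(auto)).
      pose proof (pdist_tri (Rs 0%nat) (shift 0 s (Rs 0%nat)) (Rs j)).
      rewrite (pdist_sym (Rs 0%nat) (shift 0 s (Rs 0%nat))), pdist_shift_self, Rabs_pos_eq in H by lra. lra.
  - exists 0%nat. split. lia. rewrite pdist_shift_self, Rabs_pos_eq; lra.
Qed.

Lemma margin z : A_set K Rs r z -> exists d, 0 < d /\ forall s, s < r + d -> A_set K Rs s z.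
Proof.
  intros Hz. destruct (exists_min K (fun j => pdist z (Rs j) - r)) as (d & Hd & Hd2).
  { intros j Hj. specialize (Hz j Hj). lra. }
  exists d. split; auto. intros s Hs j Hj. specialize (Hd2 j Hj). lra.
Qed.

Lemma Heq' x : A_set K Rs r x -> laplacian phi x = Cst * pos32 (phi x - mu).
Proof. intros. rewrite Heq; auto. Qed.


Lemma Ex_lt1 rho : r < rho -> Ex r rho < 1.
Proof.
  intros H. unfold Ex. rewrite <- exp_0. apply exp_increasing. pose proof xi_bounds.
  assert (ln r < ln rho) by (apply ln_increasing; lra). nra.
Qed.

Lemma Fm_pos b rho : 0 < rho -> 0 < U b r rho -> 0 < Fm b r rho.
Proof. intros. unfold Fm. pose proof cS_pos. apply Rdiv_lt_0_compat. apply Rdiv_lt_0_compat; auto.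
  apply pow_lt; auto. apply pow_lt; auto. Qed.

Lemma LB_b (b s : R) (j0 : nat) : (j0 < K)%nat -> r < s -> s <= 2 * r ->
  (forall w, bdA K Rs s w -> mu < phi w) ->
  (forall w, bdA K Rs s w -> sqrt (c_S * / r ^ 4 * / phi w) - 1 < b) ->
  -1 < b /\ forall z, A_set K Rs s z -> Fm b r (pdist z (Rs j0)) <= phi z.
Proof.
  intros Hj0 Hs1 Hs2 Hmub Hsq.
  assert (Hb : -1 < b).
  { destruct (bd_ne s ltac:(lra)) as [w Hw]. specialize (Hsq w Hw).
    pose proof (sqrt_pos (c_S * / r ^ 4 * / phi w)). lra. }
  split; auto.
  assert (Hbd : forall w, bdA K Rs s w -> c_S / r ^ 4 / (1 + b) ^ 2 < phi w).
  { intros w Hw. specialize (Hsq w Hw). specialize (Hmub w Hw). pose proof cS_pos.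
    set (X := c_S * / r ^ 4 * / phi w) in *.
    assert (HX : 0 < X) by (unfold X; apply Rmult_lt_0_compat; [apply Rmult_lt_0_compat; [lra|apply Rinv_0_lt_compat, pow_lt; lra]|apply Rinv_0_lt_compat; lra]).
    assert (X < (1 + b) ^ 2).
    { pose proof (sqrt_sqrt X ltac:(lra)). pose proof (sqrt_pos X). nra. }
    unfold X in H0.
    assert (c_S / r ^ 4 < (1 + b) ^ 2 * phi w).
    { apply Rmult_lt_compat_r with (r := phi w) in H0; [|lra].
      replace (c_S * / r ^ 4 * / phi w * phi w) with (c_S / r ^ 4) in H0 by (field; split; lra). lra. }
    apply Rmult_lt_reg_r with ((1 + b) ^ 2). apply pow_lt; lra.
    replace (c_S / r ^ 4 / (1 + b) ^ 2 * (1 + b) ^ 2) with (c_S / r ^ 4) by (field; lra). lra. }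
  assert (HU : forall rho, r < rho -> 0 < U b r rho).
  { intros rho Hrho. pose proof (U_pos b r rho Hb Hr ltac:(lra)). pose proof (Rmin_pos1 b Hb). lra. }
  intros z Hz.
  pose proof (MP_V true K Rs r s phi (Fam j0 (Fm b r)) (Fam j0 (F1m b r)) (Fam j0 (F2m b r)) 0
    ltac:(lra) Hs1) as HMP.
  assert (Vf K Rs (Fam j0 (Fm b r)) 0 z <= phi z) as HV.
  2:{ rewrite Vf_Fam in HV by auto. lra. }
  apply HMP; cbv beta iota; auto.
  - apply HF_Fam. intros rho Hrho. apply Fm_deriv; try lra. specialize (HU rho Hrho). lra.
  - apply HFinf_Fam. apply Fm_inf; auto.
  - lra.
  - intros w Hw. rewrite Vf_Fam by auto.
    assert (s <= pdist w (Rs j0)) by (apply (proj1 Hw); auto).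
    pose proof (Fm_le_r b r (pdist w (Rs j0)) Hb Hr ltac:(lra)). specialize (Hbd w Hw). lra.
  - intros x0 Hx0 [H1 H2]. rewrite Vf_Fam in H1 by auto. rewrite LapV_Fam in H2 by auto.
    assert (HA : A_set K Rs r x0) by (intros j Hj; specialize (Hx0 j Hj); lra).
    rewrite (Heq' x0 HA) in H2.
    set (rho := pdist x0 (Rs j0)) in *.
    assert (Hrho : r < rho) by (unfold rho; specialize (Hx0 j0 Hj0); lra).
    pose proof (HU rho Hrho) as HUr.
    pose proof (Fm_sub b r rho ltac:(lra) HUr).
    pose proof (Fm_pos b rho ltac:(lra) HUr).
    pose proof Cst_pos.
    assert (pos32 (phi x0 - mu) < Fm b r rho * sqrt (Fm b r rho)).
    { destruct (Rle_or_lt (phi x0 - mu) 0).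
      - rewrite pos32_nonpos by auto. apply Rmult_lt_0_compat; auto. apply sqrt_lt_R0; auto.
      - rewrite pos32_pos by lra. apply pow32_lt; lra. }
    assert (Cst * pos32 (phi x0 - mu) < Cst * (Fm b r rho * sqrt (Fm b r rho))) by (apply Rmult_lt_compat_l; auto).
    lra.
Qed.


Lemma LB_key a : a_of K Rs phi r = Finite a -> forall b, a < b -> forall d, 0 < d ->
  exists s, r < s < r + d /\ s <= 2 * r /\ (forall w, bdA K Rs s w -> mu < phi w) /\
    (forall w, bdA K Rs s w -> sqrt (c_S * / r ^ 4 * / phi w) - 1 < b).
Proof.
  intros Ha b Hab d Hd. destruct ev_mu as (d1 & Hd1 & Hev).
  set (d' := Rmin d (Rmin d1 r)).
  assert (Hd' : 0 < d') by (unfold d'; repeat apply Rmin_pos; auto).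
  assert (Hd'2 : d' <= d /\ d' <= d1 /\ d' <= r).
  { unfold d'. pose proof (Rmin_l d (Rmin d1 r)). pose proof (Rmin_r d (Rmin d1 r)).
    pose proof (Rmin_l d1 r). pose proof (Rmin_r d1 r). lra. }
  destruct (liminf_small _ r a b Ha Hab d' Hd') as (s & Hs & Hgs).
  exists s. split; [lra|]. split; [lra|]. split.
  - apply Hev. lra.
  - apply (sup_bd_lt K Rs _ s b Hgs).
Qed.

Lemma LB a : a_of K Rs phi r = Finite a -> -1 <= a /\
  forall j0, (j0 < K)%nat -> forall z, A_set K Rs r z ->
    0 < U a r (pdist z (Rs j0)) /\ Fm a r (pdist z (Rs j0)) <= phi z.
Proof.
  intros Ha.
  assert (Hb1 : forall b, a < b -> -1 < b).
  { intros b Hab. destruct (LB_key a Ha b Hab 1 Rlt_0_1) as (s & Hs & Hs2 & Hmub & Hsq).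
    destruct (LB_b b s 0%nat ltac:(lia) ltac:(lra) Hs2 Hmub Hsq); auto. }
  assert (Ha1 : -1 <= a).
  { apply Rnot_lt_le. intro. specialize (Hb1 ((a + -1) / 2) ltac:(lra)). lra. }
  split; auto. intros j0 Hj0 z Hz.
  destruct (margin z Hz) as (d2 & Hd2 & Hm).
  assert (Hkey : forall b, a < b -> Fm b r (pdist z (Rs j0)) <= phi z).
  { intros b Hab. destruct (LB_key a Ha b Hab d2 Hd2) as (s & Hs & Hs2 & Hmub & Hsq).
    destruct (LB_b b s j0 Hj0 ltac:(lra) Hs2 Hmub Hsq) as [_ H]. apply H. apply Hm. lra. }
  set (rho := pdist z (Rs j0)) in *.
  assert (Hrho : r < rho) by (apply Hz; auto).
  assert (HU : 0 < U a r rho).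
  { pose proof (Ex_lt1 rho Hrho). destruct (Ex_bounds r rho Hr ltac:(lra)) as [[E1 _] _].
    unfold U. destruct (Rle_or_lt 0 a). nra. nra. }
  split; auto.
  apply Rnot_lt_le. intros Hlt.
  destruct (Fm_cont_b a r rho ltac:(lra) ltac:(lra) (Fm a r rho - phi z) ltac:(lra)) as (d & Hd & Hc).
  specialize (Hc (a + d / 2) ltac:(rewrite Rabs_pos_eq; lra)).
  specialize (Hkey (a + d / 2) ltac:(lra)). apply Rabs_def2 in Hc. lra.
Qed.


Lemma om_eq a y : r < pnorm y -> 0 < U a r (pnorm y) -> omega_minus a r y = Finite (Fm a r (pnorm y)).
Proof.
  intros H1 H2. unfold omega_minus. rewrite Rpower_Ex by lra. fold (U a r (pnorm y)).
  destruct (Req_EM_T (U a r (pnorm y)) 0); [lra|]. f_equal.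
Qed.

Lemma maxr_ge0 u v : Rbar_le (Finite 0) u -> Rbar_le (Finite 0) (Rbar_maxr u v).
Proof.
  intros H. unfold Rbar_maxr. destruct (Rbar_lt_dec u v); auto.
  apply Rbar_le_trans with u; auto. apply Rbar_lt_le; auto.
Qed.

Lemma NU_fin a : a_of K Rs phi r = Finite a -> exists nuv, nu a mu r = Finite nuv /\ 0 <= nuv /\
  forall j, (j < K)%nat -> forall z, A_set K Rs r z ->
    nuv <= mu * pdist z (Rs j) \/ nuv <= Fm a r (pdist z (Rs j)) * pdist z (Rs j).
Proof.
  intros Ha. destruct (LB a Ha) as [Ha1 HLB].
  assert (H0 : Rbar_le (Finite 0) (nu a mu r)).
  { unfold nu. apply glb_ge. intros y (x' & Hx' & ->). apply maxr_ge0. simpl.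
    pose proof (pnorm_pos x'). apply Rmult_le_pos; lra. }
  assert (Hel : forall j, (j < K)%nat -> forall z, A_set K Rs r z ->
    Rbar_le (nu a mu r) (Rbar_maxr (Finite (mu * pdist z (Rs j))) (Finite (Fm a r (pdist z (Rs j)) * pdist z (Rs j))))).
  { intros j Hj z Hz. unfold nu. apply glb_le_gen. exists (psub z (Rs j)). split.
    - specialize (Hz j Hj). unfold pdist in Hz. lra.
    - destruct (HLB j Hj z Hz) as [HU _]. rewrite om_eq. reflexivity. apply Hz; auto. auto. }
  assert (Hz0 : A_set K Rs r (shift 0 (2 * r) (Rs 0%nat))).
  { intros j Hj. destruct (Nat.eq_dec j 0) as [->|Hn].
    + rewrite pdist_shift_self, Rabs_pos_eq; lra.
    + destruct HR0 as [_ H4]. specialize (H4 0%nat j ltac:(lia) Hj ltac:(auto)).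
      pose proof (pdist_tri (Rs 0%nat) (shift 0 (2 * r) (Rs 0%nat)) (Rs j)).
      rewrite (pdist_sym (Rs 0%nat) (shift 0 (2 * r) (Rs 0%nat))), pdist_shift_self, Rabs_pos_eq in H by lra. lra. }
  pose proof (Hel 0%nat ltac:(lia) _ Hz0) as Hel0.
  destruct (nu a mu r) as [nuv| |] eqn:En.
  2:{ unfold Rbar_maxr in Hel0. destruct (Rbar_lt_dec _ _); simpl in Hel0; contradiction. }
  2:{ simpl in H0. contradiction. }
  exists nuv. split; auto. split. simpl in H0; auto.
  intros j Hj z Hz. specialize (Hel j Hj z Hz).
  unfold Rbar_maxr in Hel. destruct (Rbar_lt_dec _ _); simpl in Hel; auto.
Qed.


Lemma NU a : a_of K Rs phi r = Finite a -> forall j, (j < K)%nat -> forall x, A_set K Rs r x ->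
  Rbar_le (Rbar_mult (nu a mu r) (Finite (/ pdist x (Rs j)))) (Finite (phi x)).
Proof.
  intros Ha j Hj x Hx.
  destruct (LB a Ha) as [Ha1 HLB].
  destruct (NU_fin a Ha) as (nuv & En & Hnu0 & Hnu). rewrite En. simpl.
  destruct ev_mu as (d1 & Hd1 & Hev).
  destruct (margin x Hx) as (d2 & Hd2 & Hm).
  set (s := r + Rmin d1 d2 / 2).
  assert (Hs : r < s /\ s < r + d1 /\ s < r + d2).
  { unfold s. pose proof (Rmin_l d1 d2). pose proof (Rmin_r d1 d2). pose proof (Rmin_pos d1 d2 Hd1 Hd2). lra. }
  set (rx := pdist x (Rs j)).
  assert (Hrx : r < rx) by (apply Hx; auto).
  apply Rnot_lt_le. intros Hlt.
  set (eta := (nuv * / rx - phi x) * rx / 2).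
  assert (Heta : 0 < eta) by (unfold eta; apply Rmult_lt_0_compat; [apply Rmult_lt_0_compat|]; lra).
  assert (Hnub : forall w, A_set K Rs r w -> nuv / pdist w (Rs j) <= Rmax mu (phi w) ).
  { intros w Hw. pose proof (Hw j Hj) as Hrw. destruct (HLB j Hj w Hw) as [_ HF].
    destruct (Hnu j Hj w Hw) as [H|H].
    - eapply Rle_trans; [|apply Rmax_l]. apply Rmult_le_reg_r with (pdist w (Rs j)). lra.
      unfold Rdiv. rewrite Rmult_assoc, Rinv_l, Rmult_1_r by lra. lra.
    - eapply Rle_trans; [|apply Rmax_r]. apply Rmult_le_reg_r with (pdist w (Rs j)). lra.
      unfold Rdiv. rewrite Rmult_assoc, Rinv_l, Rmult_1_r by lra. nra. }
  assert (HFn : forall rho, r < rho -> Fn (nuv - eta) (eta * r) rho <= nuv / rho).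
  { intros rho Hrho. unfold Fn.
    replace ((nuv - eta) / rho + eta * r / rho ^ 2) with (nuv / rho - eta * (rho - r) / rho ^ 2) by (field; lra).
    assert (0 <= eta * (rho - r) / rho ^ 2) by (apply Rdiv_le_0_compat; [nra|apply pow_lt; lra]). lra. }
  pose proof (MP_V true K Rs r s phi (Fam j (Fn (nuv - eta) (eta * r))) (Fam j (F1n (nuv - eta) (eta * r)))
                (Fam j (F2n (nuv - eta) (eta * r))) 0 ltac:(lra) ltac:(lra)) as HMP.
  assert (Vf K Rs (Fam j (Fn (nuv - eta) (eta * r))) 0 x <= phi x) as HV.
  2:{ rewrite Vf_Fam in HV by auto. fold rx in HV.
      unfold Fn in HV.
      replace ((nuv - eta) / rx + eta * r / rx ^ 2) with (nuv / rx - eta * (rx - r) / rx ^ 2) in HV by (field; lra).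
      assert (eta * (rx - r) / rx ^ 2 <= eta / rx).
      { apply Rmult_le_reg_r with (rx ^ 2). apply pow_lt; lra.
        replace (eta * (rx - r) / rx ^ 2 * rx ^ 2) with (eta * (rx - r)) by (field; lra).
        replace (eta / rx * rx ^ 2) with (eta * rx) by (field; lra). nra. }
      assert (eta / rx = (nuv * / rx - phi x) / 2) by (unfold eta; field; lra).
      unfold Rdiv in *. lra. }
  apply HMP; cbv beta iota; auto.
  - apply HF_Fam. intros rho Hrho. apply Fn_deriv. lra.
  - apply HFinf_Fam. apply Fn_inf.
  - lra.
  - intros w Hw. rewrite Vf_Fam by auto.
    assert (HwA : A_set K Rs r w) by (intros k Hk; pose proof (proj1 Hw k Hk); lra).
    assert (s <= pdist w (Rs j)) by (apply (proj1 Hw); auto).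
    pose proof (HFn (pdist w (Rs j)) ltac:(lra)). pose proof (Hnub w HwA).
    pose proof (Hev s ltac:(lra) w Hw). unfold Rmax in H1. destruct (Rle_dec mu (phi w)); lra.
  - intros x0 Hx0 [H1 H2]. rewrite Vf_Fam in H1 by auto. rewrite LapV_Fam in H2 by auto.
    assert (HA : A_set K Rs r x0) by (intros k Hk; specialize (Hx0 k Hk); lra).
    rewrite (Heq' x0 HA) in H2.
    set (rho := pdist x0 (Rs j)) in *.
    assert (Hrho : r < rho) by (unfold rho; specialize (Hx0 j Hj); lra).
    rewrite Fn_lap in H2 by lra.
    pose proof (HFn rho Hrho). pose proof (Hnub x0 HA). fold rho in H0.
    destruct (HLB j Hj x0 HA) as [_ HF0]. fold rho in HF0.
    assert (phi x0 < mu).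
    { unfold Rmax in H0. destruct (Rle_dec mu (phi x0)); lra. }
    rewrite pos32_nonpos in H2 by lra.
    assert (0 < 2 * (eta * r) / rho ^ 4).
    { apply Rdiv_lt_0_compat; [nra|apply pow_lt; lra]. }
    lra.
  - apply Hm. lra.
Qed.


Lemma sq_bound s : 0 < r -> r <= s -> 1 - 2 * (s - r) / r <= (r / s) ^ 2.
Proof.
  intros H1 H2.
  assert ((r / s) ^ 2 - (1 - 2 * (s - r) / r) = (s - r) ^ 2 * (2 * s + r) / (r * s ^ 2)) by (field; lra).
  assert (0 <= (s - r) ^ 2 * (2 * s + r) / (r * s ^ 2)).
  { apply Rdiv_le_0_compat. apply Rmult_le_pos. apply pow2_ge_0. lra. apply Rmult_lt_0_compat; [lra|apply pow_lt; lra]. }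
  lra.
Qed.

Lemma sum_lin K0 (a b : nat -> R) c : sum_nuclei K0 (fun j => a j + c * b j) = sum_nuclei K0 a + c * sum_nuclei K0 b.
Proof. induction K0. unfold sum_nuclei; simpl; ring. rewrite !sum_nuclei_S, IHK0. ring. Qed.

Lemma sum_scal K0 (a : nat -> R) c : sum_nuclei K0 (fun j => c * a j) = c * sum_nuclei K0 a.
Proof. induction K0. unfold sum_nuclei; simpl; ring. rewrite !sum_nuclei_S, IHK0. ring. Qed.

Lemma UB_B A B : A_of K Rs phi mu r = Finite A -> A < B -> forall x, A_set K Rs r x ->
  phi x <= sum_nuclei K (fun j => Fp B r (pdist x (Rs j))) + mu.
Proof.
  intros HA HAB x Hx.
  destruct ev_mu as (d1 & Hd1 & Hev).
  destruct (margin x Hx) as (d2 & Hd2 & Hm).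
  set (b' := (A + B) / 2).
  set (d3 := r * (B - b') / (2 * (Rabs B + 1))).
  assert (Hd3 : 0 < d3).
  { unfold d3, b'. pose proof (Rabs_pos B). apply Rdiv_lt_0_compat; [apply Rmult_lt_0_compat|]; lra. }
  set (d := Rmin (Rmin d1 d2) (Rmin r d3)).
  assert (Hd : 0 < d) by (unfold d; repeat apply Rmin_pos; auto).
  assert (Hd' : d <= d1 /\ d <= d2 /\ d <= r /\ d <= d3).
  { unfold d. pose proof (Rmin_l (Rmin d1 d2) (Rmin r d3)). pose proof (Rmin_r (Rmin d1 d2) (Rmin r d3)).
    pose proof (Rmin_l d1 d2). pose proof (Rmin_r d1 d2). pose proof (Rmin_l r d3). pose proof (Rmin_r r d3). lra. }
  destruct (liminf_small _ r A b' HA ltac:(unfold b'; lra) d Hd) as (s & Hs & Hgs).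
  pose proof (sup_bd_lt K Rs _ s b' Hgs) as Hsb. simpl in Hsb.
  pose proof cS_pos as HcS.
  assert (HB : -1 < B).
  { destruct (bd_ne s ltac:(lra)) as [w Hw]. specialize (Hsb w Hw). specialize (Hev s ltac:(lra) w Hw).
    assert (0 < / c_S * s ^ 4 * (phi w - mu)).
    { apply Rmult_lt_0_compat; [apply Rmult_lt_0_compat; [apply Rinv_0_lt_compat; lra|apply pow_lt; lra]|lra]. }
    unfold b' in Hsb. lra. }
  assert (HU : forall rho, r <= rho -> 0 < U B r rho).
  { intros rho Hrho. pose proof (U_pos B r rho HB Hr Hrho). pose proof (Rmin_pos1 B HB). lra. }
  assert (HFp0 : forall rho, r <= rho -> 0 <= Fp B r rho).
  { intros rho Hrho. unfold Fp. apply Rmult_le_pos. apply Rlt_le, Rdiv_lt_0_compat; auto. apply pow_lt; lra.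
    specialize (HU rho Hrho). lra. }
  assert (HBEx : b' <= B * Ex r s).
  { destruct (Ex_bounds r s Hr ltac:(lra)) as [[E1 E2] E3].
    destruct (Rle_or_lt B 0).
    - unfold b'. nra.
    - pose proof (sq_bound s Hr ltac:(lra)).
      assert (d3 <= r * (B - b') / (2 * B)).
      { unfold d3. apply Rmult_le_compat_l. unfold b'; nra.
        apply Rinv_le_contravar. lra. rewrite Rabs_pos_eq; lra. }
      assert (2 * (s - r) / r <= (B - b') / B).
      { apply Rmult_le_reg_r with (r / 2). lra.
        replace (2 * (s - r) / r * (r / 2)) with (s - r) by (field; lra).
        replace ((B - b') / B * (r / 2)) with (r * (B - b') / (2 * B)) by (field; lra). lra. }
      assert (1 - (B - b') / B <= Ex r s) by lra.
      replace (1 - (B - b') / B) with (b' / B) in H3 by (field; lra).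
      apply Rmult_le_compat_l with (r := B) in H3; [|lra].
      replace (B * (b' / B)) with b' in H3 by (field; lra). lra. }
  pose proof (MP_V false K Rs r s phi (fun _ => Fp B r) (fun _ => F1p B r) (fun _ => F2p B r) mu
     ltac:(lra) ltac:(lra)) as HMP.
  assert (phi x <= Vf K Rs (fun _ => Fp B r) mu x) as HV.
  2:{ exact HV. }
  apply HMP; cbv beta iota; auto.
  - intros j Hj rho Hrho. apply Fp_deriv; lra.
  - intros j Hj. apply Fp_inf; auto.
  - intros w Hw. unfold Vf. destruct Hw as [Hw1 (k & Hk & Hk2)].
    specialize (Hsb w (conj Hw1 (ex_intro _ k (conj Hk Hk2)))).
    assert (phi w - mu < c_S * (1 + b') / s ^ 4).
    { assert (/ c_S * s ^ 4 * (phi w - mu) < 1 + b') by lra.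
      apply Rmult_lt_compat_l with (r := c_S / s ^ 4) in H; [|apply Rdiv_lt_0_compat; [lra|apply pow_lt; lra]].
      replace (c_S / s ^ 4 * (/ c_S * s ^ 4 * (phi w - mu))) with (phi w - mu) in H by (field; split; lra).
      replace (c_S * (1 + b') / s ^ 4) with (c_S / s ^ 4 * (1 + b')) by (field; lra). lra. }
    assert (Fp B r (pdist w (Rs k)) <= sum_nuclei K (fun j => Fp B r (pdist w (Rs j)))).
    { apply (sum_ge_term K (fun j => Fp B r (pdist w (Rs j))) k Hk). intros k' Hk'.
      apply HFp0. specialize (Hw1 k' Hk'). lra. }
    rewrite Hk2 in H0.
    assert (Fp B r s = c_S / s ^ 4 * (1 + B * Ex r s)) by reflexivity.
    change (phi w <= sum_nuclei K (fun j => Fp B r (pdist w (Rs j))) + mu).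
    assert (c_S * (1 + b') / s ^ 4 <= c_S / s ^ 4 * (1 + B * Ex r s)).
    { replace (c_S * (1 + b') / s ^ 4) with (c_S / s ^ 4 * (1 + b')) by (field; lra).
      apply Rmult_le_compat_l. apply Rlt_le, Rdiv_lt_0_compat; [lra|apply pow_lt; lra]. lra. }
    lra.
  - intros x0 Hx0 [H1 H2].
    assert (HA0 : A_set K Rs r x0) by (intros k Hk; specialize (Hx0 k Hk); lra).
    rewrite (Heq' x0 HA0) in H2. unfold Vf in H1. unfold LapV in H2. cbv beta in H1, H2.
    set (S := sum_nuclei K (fun j => Fp B r (pdist x0 (Rs j)))) in *.
    assert (HS0 : 0 <= S) by (apply sum_nonneg; intros k Hk; apply HFp0; specialize (Hx0 k Hk); lra).
    assert (Hl : sum_nuclei K (fun j => F2p B r (pdist x0 (Rs j)) + 2 * F1p B r (pdist x0 (Rs j)) / pdist x0 (Rs j))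
             <= Cst * (S * sqrt S)).
    { eapply Rle_trans.
      - apply (sum_le_K K _ (fun j => Cst * (Fp B r (pdist x0 (Rs j)) * sqrt (Fp B r (pdist x0 (Rs j)))))).
        intros k Hk. apply Fp_super. specialize (Hx0 k Hk); lra. apply HU. specialize (Hx0 k Hk); lra.
      - rewrite sum_scal. apply Rmult_le_compat_l. apply Rlt_le, Cst_pos.
        apply (pow32_superadd K (fun j => Fp B r (pdist x0 (Rs j)))).
        intros k Hk. apply HFp0. specialize (Hx0 k Hk); lra. }
    rewrite pos32_pos in H2 by lra.
    pose proof (pow32_lt S (phi x0 - mu) HS0 ltac:(lra)).
    pose proof Cst_pos.
    assert (Cst * (S * sqrt S) < Cst * ((phi x0 - mu) * sqrt (phi x0 - mu))) by (apply Rmult_lt_compat_l; auto).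
    lra.
  - apply Hm. lra.
Qed.

Lemma UB A : A_of K Rs phi mu r = Finite A -> forall x, A_set K Rs r x ->
  phi x <= sum_nuclei K (fun j => Fp A r (pdist x (Rs j))) + mu.
Proof.
  intros HA x Hx.
  set (C := sum_nuclei K (fun j => c_S / pdist x (Rs j) ^ 4 * Ex r (pdist x (Rs j)))).
  assert (HC : 0 <= C).
  { apply sum_nonneg. intros k Hk. pose proof cS_pos. specialize (Hx k Hk).
    destruct (Ex_bounds r (pdist x (Rs k)) Hr ltac:(lra)) as [[E1 _] _].
    apply Rmult_le_pos; [apply Rlt_le, Rdiv_lt_0_compat; [lra|apply pow_lt; lra]|lra]. }
  assert (Hkey : forall B, A < B -> phi x <= sum_nuclei K (fun j => Fp A r (pdist x (Rs j))) + mu + (B - A) * C).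
  { intros B HB. pose proof (UB_B A B HA HB x Hx).
    assert (sum_nuclei K (fun j => Fp B r (pdist x (Rs j))) = sum_nuclei K (fun j => Fp A r (pdist x (Rs j))) + (B - A) * C).
    { unfold C. rewrite <- sum_lin. unfold sum_nuclei. apply sum_ext. intros j _. apply Fp_lin. }
    lra. }
  apply Rnot_lt_le. intros Hlt.
  set (g := phi x - (sum_nuclei K (fun j => Fp A r (pdist x (Rs j))) + mu)).
  specialize (Hkey (A + g / (2 * (C + 1))) ltac:(assert (0 < g / (2 * (C + 1))) by (apply Rdiv_lt_0_compat; unfold g; lra); lra)).
  replace (A + g / (2 * (C + 1)) - A) with (g / (2 * (C + 1))) in Hkey by ring.
  assert (g / (2 * (C + 1)) * C < g).
  { apply Rmult_lt_reg_r with (2 * (C + 1)). lra.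
    replace (g / (2 * (C + 1)) * C * (2 * (C + 1))) with (g * C) by (field; lra). unfold g in *. nra. }
  unfold g in *. lra.
Qed.

End Main.


Theorem theorem2 (K : nat) (Rs : nat -> pt) (r mu : R) (phi : pt -> R) :
  (1 <= K)%nat ->
  (forall i j, (i < K)%nat -> (j < K)%nat -> i <> j -> Rs i <> Rs j) ->
  0 < r -> le_R0 K Rs r ->
  0 <= mu ->
  (* phi continuous on A_r *)
  (forall x, A_set K Rs r x -> continuous phi x) ->
  (* phi vanishes at infinity *)
  (forall eps, 0 < eps -> exists M, forall x, A_set K Rs r x -> M < pnorm x ->
      Rabs (phi x) < eps) ->
  (* the Thomas-Fermi type equation, classically *)
  C2_on (A_set K Rs r) phi ->
  (forall x, A_set K Rs r x ->
      laplacian phi x = 4 * PI * Rpower c_TF (- (3 / 2)) * pos32 (phi x - mu)) ->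
  (* lim_{s -> r+} inf_{dA_s} phi exists and is > mu *)
  (exists L : Rbar, Rbar_lt (Finite mu) L /\
      lim_right_Rbar (fun s => inf_bd K Rs phi s) r L) ->
  forall x, A_set K Rs r x ->
    (forall a : R, a_of K Rs phi r = Finite a ->
       forall j, (j < K)%nat ->
         Rbar_le (omega_minus a r (psub x (Rs j))) (Finite (phi x)) /\
         Rbar_le (Rbar_mult (nu a mu r) (Finite (/ pdist x (Rs j)))) (Finite (phi x))) /\
    (forall A : R, A_of K Rs phi mu r = Finite A ->
       phi x <= sum_nuclei K (fun j => omega_plus A r (psub x (Rs j))) + mu).
Proof.
  intros HK Hdist Hr HR0 Hmu Hcont Hvan HC2 Heq Hlim x Hx. split.
  - intros a Ha j Hj. split.
    + destruct (LB K Rs r mu phi HK Hr HR0 Hmu Hcont Hvan HC2 Heq Hlim a Ha) as [_ H].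
      destruct (H j Hj x Hx) as [HU HF].
      rewrite om_eq; auto. apply Hx; auto.
    + apply (NU K Rs r mu phi HK Hr HR0 Hmu Hcont Hvan HC2 Heq Hlim a Ha j Hj x Hx).
  - intros A HA. pose proof (UB K Rs r mu phi HK Hr HR0 Hmu Hcont Hvan HC2 Heq Hlim A HA x Hx).
    assert (sum_nuclei K (fun j => omega_plus A r (psub x (Rs j))) = sum_nuclei K (fun j => Fp A r (pdist x (Rs j)))).
    { unfold sum_nuclei. apply sum_ext. intros j Hj. apply in_seq in Hj.
      assert (r < pdist x (Rs j)) by (apply Hx; lia).
      unfold omega_plus, Fp, U. unfold pdist in *. rewrite Rpower_Ex by lra. unfold Rdiv. ring. }
    lra.
Qed.
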